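(* Let $G$ and $H$ be finite simple graphs without isolated vertices. Then: (i) there are no such graphs $G,H$ with $\gamma_{tR}(G\times H)\in\{1,2,3,5\}$; (ii) $\gamma_{tR}(G\times H)=4$ if and only if $G$ and $H$ are both isomorphic to $K_2$; (iii) $\gamma_{tR}(G\times H)=6$ if and only if ($G$ and $H$ each have at least two universal vertices and at least one of them has order at least three), or (one factor is $K_2$ and the other has order at least three and contains a universal vertex), or ($G$ and $H$ are both triangle centered); (iv) $\gamma_{tR}(G\times H)=7$ if and only if both $G$ and $H$ have a universal vertex, one of $G$ and $H$ has exactly one universal vertex and the other one is different from $K_2$, and at most one of $G$ and $H$ is triangle centered; (v) if at most one of $G$ and $H$ has a universal vertex, $\gamma_t(G)=\gamma_t(H)=2$, and $G$ and $H$ are not both triangle centered, then $\gamma_{tR}(G\times H)=8$.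
   Context: A total Roman dominating function on $G$ is a map $f:V(G)\to\{0,1,2\}$ such that every vertex with label 0 has a neighbor with label 2 and the subgraph induced by vertices with positive labels has no isolated vertices; $\gamma_{tR}(G)$ is the minimum of $\sum_v f(v)$ over such $f$. $\gamma_t(G)$ is the minimum size of a set $D$ such that every vertex of $G$ has a neighbor in $D$. A universal vertex of $G$ is a vertex adjacent to all other vertices. $G$ is triangle centered if it contains a triangle $xyz$ such that every vertex of $G$ is adjacent to at least two vertices of $\{x,y,z\}$. The direct product $G\times H$ has vertex set $V(G)\times V(H)$, with $(g,h)(g',h')$ an edge iff $gg'\in E(G)$ and $hh'\in E(H)$. *)

(* Defs.v *)
From mathcomp Require Import all_boot all_order.
Set Implicit Arguments. Unset Strict Implicit. Unset Printing Implicit Defensive.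

Section Graphs.
Variable T : finType.
Variable e : rel T.

Definition simple_graph : Prop := irreflexive e /\ symmetric e.

Definition no_isolated : Prop := forall x : T, exists y : T, e x y.

Definition trdf (f : {ffun T -> 'I_3}) : bool :=
  [forall v, (val (f v) == 0) ==> [exists u, e v u && (val (f u) == 2)]] &&
  [forall v, (0 < val (f v)) ==> [exists u, e v u && (0 < val (f u))]].

Definition trdf_weight (f : {ffun T -> 'I_3}) : nat := \sum_(v : T) val (f v).

(* minimum weight of a TRDF; the default value #|T|.*2 is the weight of the
   constant-2 function, which is a TRDF whenever there are no isolated vertices *)
Definition gamma_tR : nat :=
  \big[minn/#|T|.*2]_(f : {ffun T -> 'I_3} | trdf f) trdf_weight f.

Definition total_dom (D : {set T}) : bool :=
  [forall v, [exists u in D, e v u]].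

Definition gamma_t : nat :=
  \big[minn/#|T|]_(D : {set T} | total_dom D) #|D|.

Definition universal (x : T) : bool := [forall y, (y != x) ==> e x y].

Definition universals : {set T} := [set x | universal x].

Definition has_universal : Prop := exists x, universal x.

Definition isK2 : Prop := #|T| = 2 /\ forall x y : T, x != y -> e x y.

Definition triangle_centered : Prop :=
  exists x y z : T, [/\ e x y, e y z, e x z &
    forall v : T, 2 <= (e v x : nat) + (e v y : nat) + (e v z : nat)].
End Graphs.

Definition direct_prod (T1 T2 : finType) (e1 : rel T1) (e2 : rel T2)
  : rel (T1 * T2) := fun u v => e1 u.1 v.1 && e2 u.2 v.2.

(* Main.v *)
Require Import Defs.
From mathcomp Require Import all_boot all_order zify.
Set Implicit Arguments. Unset Strict Implicit. Unset Printing Implicit Defensive.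

Ltac neqs := repeat match goal with
 | H : is_true (?x != ?y) |- context[?x == ?y] => rewrite (negbTE H)
 | H : is_true (?x != ?y) |- context[?y == ?x] => rewrite [y == x]eq_sym (negbTE H)
 end.
Ltac uniqt := rewrite /= ?inE ?xpair_eqE ?eqxx /=; neqs; rewrite ?andbF ?andFb ?orbF ?andbT ?orFb /=.

Section Gr.
Variables (T : finType) (e : rel T).
Hypothesis sg : simple_graph e.

Lemma irrf x : e x x = false.
Proof. by case: sg => H _; apply: H. Qed.
Lemma esymm x y : e x y = e y x.
Proof. by case: sg => _ H; apply: H. Qed.
Lemma adj_neq x y : e x y -> x != y.
Proof. by apply: contraTneq => ->; rewrite irrf. Qed.

Lemma size_le (A : {set T}) (s : seq T) : uniq s -> {subset s <= A} -> size s <= #|A|.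
Proof. move=> us sA; rewrite -(card_uniqP us); apply: subset_leq_card; apply/subsetP => x; exact: sA. Qed.

Lemma fill (A : {set T}) (s : seq T) : uniq s -> {subset s <= A} -> #|A| <= size s ->
  forall t, t \in A -> t \in s.
Proof.
move=> us sA cA t tA; apply/negPn/negP => ts.
have u2 : uniq (t :: s) by rewrite /= ts us.
have s2 : {subset t :: s <= A} by move=> x; rewrite inE => /orP[/eqP->|]; [exact: tA| exact: sA].
by have := size_le u2 s2; rewrite /= ltnNge cA.
Qed.

Lemma card_le_seq (s : seq T) : (forall t, t \in s) -> #|T| <= size s.
Proof.
move=> H; apply: leq_trans (card_size s); apply: subset_leq_card; apply/subsetP => x _; exact: H.
Qed.

Lemma fillT (s : seq T) : uniq s -> #|T| <= size s -> forall t, t \in s.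
Proof.
move=> us c t.
have H := @fill [set: T] s us.
apply: H; [by move=> x; rewrite inE | by rewrite cardsT | by rewrite inE].
Qed.

Lemma ord3_univ (x0 : T) : no_isolated e -> #|T| <= 3 -> has_universal e.
Proof.
move=> nI c3.
have [p [q pq]] : exists p q, e p q by case: (nI x0) => y H; exists x0, y.
case: (boolP (universal e p)) => [Up|]; first by exists p.
move/forallPn => [r]; rewrite negb_imply => /andP[rp npr].
have rq : r != q by apply: contraNneq npr => ->.
have pq' := adj_neq pq.
have all3 := @fillT [:: p; q; r].
have H3 : uniq [:: p; q; r] by uniqt.
have A := all3 H3 c3.
case: (nI r) => s rs.
have sq : s = q.
  move: (A s); rewrite !inE => /or3P[/eqP sp|/eqP //|/eqP sr].
  - by move: npr; rewrite esymm -sp rs.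
  - by move: rs; rewrite sr irrf.
exists q; apply/forallP => t; apply/implyP => tq.
move: (A t); rewrite !inE => /or3P[/eqP->|/eqP tq'|/eqP->].
- by rewrite esymm.
- by move: tq; rewrite tq' eqxx.
- by rewrite esymm -sq.
Qed.

Lemma ord2_K2 : no_isolated e -> #|T| = 2 -> isK2 e.
Proof.
move=> nI c2; split => // x y xy.
have [p [q [pq E]]] : exists p q, p != q /\ [set: T] = [set p; q] by apply/cards2P; rewrite cardsT c2.
have [z xz] := nI x.
have : forall t, t \in [set p; q] by move=> t; rewrite -E inE.
move=> A.
have zx := adj_neq xz.
suff -> : y = z by [].
move: (A x) (A y) (A z) xy zx; rewrite !inE.
by move=> /orP[]/eqP-> /orP[]/eqP-> /orP[]/eqP->; rewrite ?eqxx //; rewrite eq_sym (negbTE pq).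
Qed.

Lemma K2_univs : isK2 e -> universals e = [set: T].
Proof.
case=> _ H; apply/setP => x; rewrite !inE; apply/forallP => y; apply/implyP => yx.
by apply: H; rewrite eq_sym.
Qed.

Lemma K2_card_univ : isK2 e -> #|universals e| = 2.
Proof. by move=> K; rewrite K2_univs // cardsT; case: K. Qed.

Lemma tc_card : triangle_centered e -> 3 <= #|T|.
Proof.
case=> [x [y [z [xy yz xz _]]]].
have Hxy := adj_neq xy; have Hyz := adj_neq yz; have Hxz := adj_neq xz.
have U : uniq [:: x; y; z] by uniqt.
have S : {subset [:: x; y; z] <= [set: T]} by move=> t _; rewrite inE.
by have := size_le U S; rewrite cardsT.
Qed.

Lemma gcard2 (x0 : T) : no_isolated e -> 2 <= #|T|.
Proof.
move=> nI; have [y xy] := nI x0.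
have U : uniq [:: x0; y] by rewrite /= inE (adj_neq xy).
have S : {subset [:: x0; y] <= [set: T]} by move=> t _; rewrite inE.
by have := size_le U S; rewrite cardsT.
Qed.

Lemma univ_le : #|universals e| <= #|T|.
Proof. exact: max_card. Qed.

Lemma gamma_t2 : no_isolated e -> gamma_t e = 2 -> exists p q, forall v, e v p || e v q.
Proof.
move=> nI.
have : gamma_t e = #|T| \/ exists D, total_dom e D /\ gamma_t e = #|D|.
  rewrite /gamma_t; apply: (big_ind (fun r => r = #|T| \/ exists D, total_dom e D /\ r = #|D|)).
  - by left.
  - move=> a b Ha Hb; rewrite /minn; case: ifP => _; [exact: Ha|exact: Hb].
  - by move=> D HD; right; exists D.
case=> [-> c2|[D [tD ->]] /eqP/cards2P [p [q [pq E]]]].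
  have [p [q [pq E]]] : exists p q, p != q /\ [set: T] = [set p; q] by apply/cards2P; rewrite cardsT c2.
  have K := ord2_K2 nI c2.
  exists p, q => v.
  have : v \in [set p; q] by rewrite -E inE.
  rewrite !inE => /orP[/eqP->|/eqP->].
  - by rewrite (proj2 K p q pq) orbT.
  - by rewrite (proj2 K q p) // eq_sym.
exists p, q => v; move/forallP: tD => /(_ v) /existsP [u /andP[]]; rewrite E !inE.
by move=> /orP[/eqP->|/eqP->] ->; rewrite ?orbT.
Qed.
End Gr.

Lemma bigmin_le_gen (I : eqType) (r : seq I) (P : pred I) (F : I -> nat) x j :
  j \in r -> P j -> \big[minn/x]_(i <- r | P i) F i <= F j.
Proof.
elim: r => // a r IH; rewrite inE big_cons => /orP[/eqP<-|jr] Pj; first by rewrite Pj geq_minl.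
case: ifP => _; last exact: IH.
exact: leq_trans (geq_minr _ _) (IH jr Pj).
Qed.

Lemma sum_in (T : finType) (s : seq T) : \sum_(v : T) (v \in s : nat) = #|s|.
Proof.
rewrite -sum1_card [RHS]big_mkcond /=; apply: eq_bigr => v _; by case: (v \in s).
Qed.

Lemma vinord k : k < 3 -> val (inord k : 'I_3) = k.
Proof. move=> h; exact: inordK h. Qed.

Lemma sum_set (T : finType) (A : {set T}) : \sum_(v : T) (v \in A : nat) = #|A|.
Proof.
rewrite -sum1_card [RHS]big_mkcond /=; apply: eq_bigr => v _; by case: (v \in A).
Qed.

Section Gam.
Variables (T : finType) (e : rel T).

Lemma gamma_le f : trdf e f -> gamma_tR e <= trdf_weight f.
Proof. move=> tf; rewrite /gamma_tR; apply: bigmin_le_gen => //; exact: mem_index_enum. Qed.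

Definition f2 : {ffun T -> 'I_3} := [ffun _ => inord 2].

Lemma f2_trdf : no_isolated e -> trdf e f2.
Proof.
move=> nI; apply/andP; split; apply/forallP => v; rewrite /f2 !ffunE vinord //; apply/implyP => _.
by have [u vu] := nI v; apply/existsP; exists u; rewrite vu ffunE vinord.
Qed.

Lemma f2_weight : trdf_weight f2 = #|T|.*2.
Proof.
rewrite /trdf_weight (eq_bigr (fun _ => 2)) => [|v _]; last by rewrite /f2 ffunE vinord.
by rewrite sum_nat_const -mul2n mulnC.
Qed.

Lemma gamma_att : no_isolated e -> exists f, trdf e f /\ gamma_tR e = trdf_weight f.
Proof.
move=> nI.
have : gamma_tR e = #|T|.*2 \/ exists f, trdf e f /\ gamma_tR e = trdf_weight f.
  rewrite /gamma_tR; apply: (big_ind (fun r => r = #|T|.*2 \/ exists f, trdf e f /\ r = trdf_weight f)).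
  - by left.
  - move=> a b Ha Hb; rewrite /minn; case: ifP => _; [exact: Ha|exact: Hb].
  - by move=> f Hf; right; exists f.
case=> // ->; exists f2; split; [exact: f2_trdf | by rewrite f2_weight].
Qed.

Definition mkf (s1 s2 : seq T) : {ffun T -> 'I_3} :=
  [ffun v => if v \in s2 then inord 2 else if v \in s1 then inord 1 else inord 0].

Lemma mkUB (s1 s2 : seq T) :
  (forall v, v \notin s1 -> v \notin s2 -> exists u, u \in s2 /\ e v u) ->
  (forall v, v \in s1 ++ s2 -> exists u, u \in s1 ++ s2 /\ e v u) ->
  gamma_tR e <= size s1 + (size s2).*2.
Proof.
move=> H0 H1.
have vE v : val (mkf s1 s2 v) = if v \in s2 then 2 else if v \in s1 then 1 else 0.
  by rewrite /mkf ffunE; case: ifP => _; [|case: ifP => _]; rewrite vinord.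
apply: (leq_trans (gamma_le (f := mkf s1 s2) _)).
  apply/andP; split; apply/forallP => v; apply/implyP; rewrite vE.
  - case: ifP => // v2; case: ifP => // v1 _.
    have [u [u2 vu]] := H0 v (negbT v1) (negbT v2).
    by apply/existsP; exists u; rewrite vu vE u2.
  - move=> Hv; have : v \in s1 ++ s2.
      by rewrite mem_cat; move: Hv; case: (v \in s2); case: (v \in s1); rewrite ?orbT.
    case/H1 => u [us vu]; apply/existsP; exists u; rewrite vu vE /=.
    by move: us; rewrite mem_cat; case: (u \in s2); case: (u \in s1).
rewrite /trdf_weight.
apply: (@leq_trans (\sum_v ((v \in s1 : nat) + (v \in s2 : nat).*2))).
  apply: leq_sum => v _; rewrite vE; by case: (v \in s2); case: (v \in s1).
rewrite big_split /= sum_in.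
rewrite (eq_bigr (fun v => 2 * (v \in s2 : nat))) => [|v _]; last by rewrite mul2n.
rewrite -big_distrr /= sum_in mul2n.
by apply: leq_add; [exact: card_size | rewrite leq_double; exact: card_size].
Qed.

Lemma UB_all : no_isolated e -> gamma_tR e <= #|T|.
Proof.
move=> nI; apply: leq_trans (mkUB (s1 := enum T) (s2 := [::]) _ _) _.
- by move=> v; rewrite mem_enum.
- move=> v _; have [u vu] := nI v; exists u; by rewrite cats0 mem_enum.
- by rewrite /= addn0 cardE.
Qed.
End Gam.

Definition Pset (T1 T2 : finType) (f : {ffun T1 * T2 -> 'I_3}) : {set T1 * T2} := [set v | 0 < val (f v)].
Definition V2set (T1 T2 : finType) (f : {ffun T1 * T2 -> 'I_3}) : {set T1 * T2} := [set v | val (f v) == 2].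

Definition iii (T1 T2 : finType) (e1 : rel T1) (e2 : rel T2) : Prop :=
        [\/ (2 <= #|universals e1| /\ 2 <= #|universals e2| /\
             (3 <= #|T1| \/ 3 <= #|T2|)),
            (isK2 e1 /\ 3 <= #|T2| /\ has_universal e2) \/
            (isK2 e2 /\ 3 <= #|T1| /\ has_universal e1)
          | triangle_centered e1 /\ triangle_centered e2].

Definition Concl (T1 T2 : finType) (e1 : rel T1) (e2 : rel T2) (w : nat) : Prop :=
  [/\ 4 <= w, (w <= 5 -> isK2 e1 /\ isK2 e2),
      (w <= 6 -> iii e1 e2 \/ (isK2 e1 /\ isK2 e2)) &
      (w <= 7 -> (has_universal e1 /\ has_universal e2) \/
                 (triangle_centered e1 /\ triangle_centered e2))].

Lemma iiiC (T1 T2 : finType) (e1 : rel T1) (e2 : rel T2) : iii e2 e1 -> iii e1 e2.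
Proof.
case=> [[a [b [c|c]]]|[c|c]|[a b]].
- by apply: Or31; do !split => //; right.
- by apply: Or31; do !split => //; left.
- by apply: Or32; right.
- by apply: Or32; left.
- by apply: Or33.
Qed.

Lemma ConclC (T1 T2 : finType) (e1 : rel T1) (e2 : rel T2) w : Concl e2 e1 w -> Concl e1 e2 w.
Proof.
case=> H4 H5 H6 H7; split => // [/H5|/H6|/H7]; try tauto.
case=> [/iiiC|]; tauto.
Qed.

Ltac memt := rewrite ?inE ?xpair_eqE ?eqxx /=; neqs; rewrite ?andbF ?andFb ?andbT ?andTb ?orbF ?orFb ?orbT ?orTb /=.

Ltac bfin := let H := fresh in move=> H;
  repeat (case/orP: H => H; [move/eqP: H => ->; by rewrite ?eqxx ?orbT|]);
  move/eqP: H => ->; by rewrite ?eqxx ?orbT.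

Lemma le2eq k : k <= 2 -> 2 <= k -> k = 2.
Proof. by move=> h1 h2; apply/eqP; rewrite eqn_leq h1 h2. Qed.

Section Prod.
Variables (T1 T2 : finType) (e1 : rel T1) (e2 : rel T2).
Hypotheses (sG : simple_graph e1) (sH : simple_graph e2) (nG : no_isolated e1) (nH : no_isolated e2).
Variable f : {ffun T1 * T2 -> 'I_3}.
Hypothesis tf : trdf (direct_prod e1 e2) f.

Local Notation P := (Pset f).
Local Notation V2 := (V2set f).
Local Notation w := (trdf_weight f).
Local Notation n := #|T1|.
Local Notation m := #|T2|.

Lemma weightE : w = #|P| + #|V2|.
Proof.
rewrite /trdf_weight -!sum_set.
rewrite -big_split /=; apply: eq_bigr => v _; rewrite !inE.
by case: (f v) => [[|[|[|k]]] Hk].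
Qed.

Lemma V2P v : v \in V2 -> v \in P.
Proof. by rewrite !inE => /eqP->. Qed.

Lemma V2leP : #|V2| <= #|P|.
Proof. apply: subset_leq_card; apply/subsetP => v; exact: V2P. Qed.

Lemma coverP x y : (x, y) \notin P -> exists a b, [/\ (a, b) \in V2, e1 x a & e2 y b].
Proof.
rewrite inE -eqn0Ngt => H.
case/andP: tf => /forallP /(_ (x, y)) /implyP /(_ H) /existsP [[a b] /andP [/andP [xa yb] ab]] _.
by exists a, b; rewrite inE.
Qed.

Lemma posnbP x y : (x, y) \in P -> exists c d, [/\ (c, d) \in P, e1 x c & e2 y d].
Proof.
rewrite inE => H.
case/andP: tf => _ /forallP /(_ (x, y)) /implyP /(_ H) /existsP [[a b] /andP [/andP [xa yb] ab]].
by exists a, b; rewrite inE.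
Qed.

Lemma irr1 x : e1 x x = false. Proof. exact: irrf. Qed.
Lemma irr2 x : e2 x x = false. Proof. exact: irrf. Qed.

Lemma C0 (x0 : T1) (y0 : T2) : #|V2| = 0 -> Concl e1 e2 w.
Proof.
move=> /eqP; rewrite cards_eq0 => /eqP V0.
have PT : P = [set: T1 * T2].
  apply/setP => [[x y]]; rewrite [in RHS]inE; apply/negPn/negP => /coverP [a [b [ab _ _]]].
  by move: ab; rewrite V0 inE.
have wE : w = n * m by rewrite weightE V0 cards0 addn0 PT cardsT card_prod.
have n2 := gcard2 sG x0 nG; have m2 := gcard2 sH y0 nH.
rewrite wE; split.
- nia.
- move=> h; have e1n : n = 2 by nia. have e2m : m = 2 by nia.
  by split; apply: ord2_K2.
- move=> h.
  have [n22|n3] : n = 2 \/ n = 3 by nia.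
  + have [m22|m3] : m = 2 \/ m = 3 by nia.
    * by right; split; apply: ord2_K2.
    * left; apply: Or32; left; split; first exact: ord2_K2.
      by split; [rewrite m3 | apply: ord3_univ y0 _ _; rewrite ?m3].
  + have m22 : m = 2 by nia.
    left; apply: Or32; right; split; first exact: ord2_K2.
    by split; [rewrite n3 | apply: ord3_univ x0 _ _; rewrite ?n3].
- move=> h; left; split; [apply: ord3_univ x0 _ _ | apply: ord3_univ y0 _ _] => //; nia.
Qed.


Lemma C1 a b : V2 = [set (a, b)] -> Concl e1 e2 w.
Proof.
move=> V1.
have cov x y : (x, y) \notin P -> e1 x a /\ e2 y b.
  by move=> /coverP [a' [b' [] ]]; rewrite V1 inE xpair_eqE => /andP[/eqP-> /eqP->].
have Pab : (a, b) \in P by apply: V2P; rewrite V1 inE.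
have [c [d [Pcd ac bd]]] := posnbP Pab.
have rowa y : (a, y) \in P by apply/negPn/negP => /cov []; rewrite irr1.
have colb x : (x, b) \in P by apply/negPn/negP => /cov [_]; rewrite irr2.
have ac' := adj_neq sG ac; have bd' := adj_neq sH bd.
have wE : w = #|P| + 1 by rewrite weightE V1 cards1.
have U4 : uniq [:: (a, b); (a, d); (c, b); (c, d)] by uniqt.
have S4 : {subset [:: (a, b); (a, d); (c, b); (c, d)] <= P}.
  by move=> v; rewrite !in_cons in_nil orbF => /or4P[]/eqP->.
have P4 := size_le U4 S4.
rewrite wE; split.
- move: P4 => /= H. apply: leq_trans H _. exact: leq_addr.
- move=> h.
  have hh : #|P| <= 4 by clear -h; lia.
  have F := fill U4 S4 hh.
  have Ht : forall t, t \in [:: a; c].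
      by move=> t; move: (F _ (colb t)); memt; bfin.
  have Hy : forall y, y \in [:: b; d].
    by move=> y; move: (F _ (rowa y)); memt; bfin.
  have h1 : n <= 2 := card_le_seq Ht.
  have h2 : m <= 2 := card_le_seq Hy.
  have h3 := gcard2 sG a nG; have h4 := gcard2 sH b nH.
  by split; apply: ord2_K2 => //; apply: le2eq.
- move=> h; have hh : #|P| <= 5 by clear -h; lia.
  case: (boolP [forall t, t \in [:: a; c]]) => [/forallP Ht | /forallPn [t]].
  + have h1 : n <= 2 := card_le_seq Ht.
    case: (boolP [forall y, y \in [:: b; d]]) => [/forallP Hy | /forallPn [y]].
    * have h2 : m <= 2 := card_le_seq Hy.
      have h3 := gcard2 sG a nG; have h4 := gcard2 sH b nH.
      by right; split; apply: ord2_K2 => //; apply: le2eq.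
    * rewrite !inE negb_or => /andP[yb yd].
      have U5 : uniq [:: (a, b); (a, d); (c, b); (c, d); (a, y)] by uniqt.
      have S5 : {subset [:: (a, b); (a, d); (c, b); (c, d); (a, y)] <= P}.
        move=> v; rewrite !in_cons in_nil orbF => /orP[/eqP->//|].
        by move=> /orP[/eqP->//|] /orP[/eqP->//|] /orP[/eqP->//|] /eqP->.
      have F := fill U5 S5 hh.
      have Hy : forall y', y' \in [:: b; d; y].
        by move=> y'; move: (F _ (rowa y')); memt; bfin.
      have h2 : m <= 3 := card_le_seq Hy.
      have U3 : uniq [:: b; d; y] by uniqt.
      have h3 : 3 <= m.
        have S3 : {subset [:: b; d; y] <= [set: T2]} by move=> z _; rewrite inE.
        by have := size_le U3 S3; rewrite cardsT.
      have h4 := gcard2 sG a nG.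
      left; apply: Or32; left; split; first by apply: ord2_K2 => //; apply: le2eq.
      by split => //; apply: (ord3_univ sH b nH).
  + rewrite !inE negb_or => /andP[ta tc].
    have U5 : uniq [:: (a, b); (a, d); (c, b); (c, d); (t, b)] by uniqt.
    have S5 : {subset [:: (a, b); (a, d); (c, b); (c, d); (t, b)] <= P}.
      move=> v; rewrite !in_cons in_nil orbF => /orP[/eqP->//|].
      by move=> /orP[/eqP->//|] /orP[/eqP->//|] /orP[/eqP->//|] /eqP->.
    have F := fill U5 S5 hh.
    have Ht : forall t', t' \in [:: a; c; t].
      by move=> t'; move: (F _ (colb t')); memt; bfin.
    have Hy : forall y', y' \in [:: b; d].
      by move=> y'; move: (F _ (rowa y')); memt; bfin.
    have h1 : n <= 3 := card_le_seq Ht.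
    have h2 : m <= 2 := card_le_seq Hy.
    have U3 : uniq [:: a; c; t] by uniqt.
    have h3 : 3 <= n.
      have S3 : {subset [:: a; c; t] <= [set: T1]} by move=> z _; rewrite inE.
      by have := size_le U3 S3; rewrite cardsT.
    have h4 := gcard2 sH b nH.
    left; apply: Or32; right; split; first by apply: ord2_K2 => //; apply: le2eq.
    by split => //; apply: (ord3_univ sG a nG).
- move=> h; have hh : #|P| <= 6 by clear -h; lia.
  left.
  case: (boolP (universal e1 a)) => [Ua|/forallPn [x]]; last first.
    rewrite negb_imply => /andP[xa nax].
    have xc : x != c by apply: contraNneq nax => ->.
    have Pxd : (x, d) \in P.
      by apply/negPn/negP => /cov [] ; rewrite (esymm sG x a) (negbTE nax).
    have U6 : uniq [:: (a, b); (a, d); (c, b); (c, d); (x, b); (x, d)] by uniqt.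
    have S6 : {subset [:: (a, b); (a, d); (c, b); (c, d); (x, b); (x, d)] <= P}.
      move=> v; rewrite !in_cons in_nil orbF => /orP[/eqP->//|].
      by move=> /orP[/eqP->//|] /orP[/eqP->//|] /orP[/eqP->//|] /orP[/eqP->//|] /eqP->.
    have F := fill U6 S6 hh.
    have Ht : forall t', t' \in [:: a; c; x].
      by move=> t'; move: (F _ (colb t')); memt; bfin.
    have Hy : forall y', y' \in [:: b; d].
      by move=> y'; move: (F _ (rowa y')); memt; bfin.
    have h1 : n <= 3 := card_le_seq Ht.
    have h2 : m <= 2 := card_le_seq Hy.
    by split; [apply: (ord3_univ sG a nG); apply: leq_trans h1 _ | apply: (ord3_univ sH b nH); apply: leq_trans h2 _].
  case: (boolP (universal e2 b)) => [Ub|/forallPn [y]]; last first.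
    rewrite negb_imply => /andP[yb nby].
    have yd : y != d by apply: contraNneq nby => ->.
    have Pcy : (c, y) \in P.
      by apply/negPn/negP => /cov [_] ; rewrite (esymm sH y b) (negbTE nby).
    have U6 : uniq [:: (a, b); (a, d); (c, b); (c, d); (a, y); (c, y)] by uniqt.
    have S6 : {subset [:: (a, b); (a, d); (c, b); (c, d); (a, y); (c, y)] <= P}.
      move=> v; rewrite !in_cons in_nil orbF => /orP[/eqP->//|].
      by move=> /orP[/eqP->//|] /orP[/eqP->//|] /orP[/eqP->//|] /orP[/eqP->//|] /eqP->.
    have F := fill U6 S6 hh.
    have Ht : forall t', t' \in [:: a; c].
      by move=> t'; move: (F _ (colb t')); memt; bfin.
    have Hy : forall y', y' \in [:: b; d; y].
      by move=> y'; move: (F _ (rowa y')); memt; bfin.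
    have h1 : n <= 2 := card_le_seq Ht.
    have h2 : m <= 3 := card_le_seq Hy.
    by split; [apply: (ord3_univ sG a nG); apply: leq_trans h1 _ | apply: (ord3_univ sH b nH); apply: leq_trans h2 _].
  by split; [exists a | exists b].
Qed.

End Prod.

Section Prod.
Variables (T1 T2 : finType) (e1 : rel T1) (e2 : rel T2).
Hypotheses (sG : simple_graph e1) (sH : simple_graph e2) (nG : no_isolated e1) (nH : no_isolated e2).
Variable f : {ffun T1 * T2 -> 'I_3}.
Hypothesis tf : trdf (direct_prod e1 e2) f.

Local Notation P := (Pset f).
Local Notation V2 := (V2set f).
Local Notation w := (trdf_weight f).
Local Notation n := #|T1|.
Local Notation m := #|T2|.
Let ir1 := irrf sG.
Let ir2 := irrf sH.
Let cov0 := coverP tf.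
Let pnb := posnbP tf.

Lemma C2a a b1 b2 : (a, b1) \in V2 -> (a, b2) \in V2 -> b1 != b2 -> #|V2| = 2 ->
  Concl e1 e2 w.
Proof.
move=> V1 V2' b12 c2.
have U2 : uniq [:: (a, b1); (a, b2)] by uniqt.
have S2 : {subset [:: (a, b1); (a, b2)] <= V2}.
  by move=> v; rewrite !in_cons in_nil orbF => /orP[]/eqP->.
have F2 := fill U2 S2 (ltac:(by rewrite c2)).
have cov x y : (x, y) \notin P -> e1 x a.
  move=> /cov0 [a' [b' [/F2]]]; rewrite !in_cons in_nil orbF !xpair_eqE.
  by move=> /orP[]/andP[/eqP-> _].
have rowa y : (a, y) \in P by apply/negPn/negP => /cov; rewrite ir1.
have [c [d [Pcd ac b1d]]] := pnb (V2P V1).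
have [c' [d' [Pcd' ac' dd']]] := pnb (rowa d).
have ac1 := adj_neq sG ac; have ac2 := adj_neq sG ac'.
have dd1 := adj_neq sH dd'; have bd1 := adj_neq sH b1d.
have wE : w = #|P| + 2 by rewrite weightE c2.
have U4 : uniq [:: (a, b1); (a, b2); (c, d); (c', d')] by uniqt.
have S4 : {subset [:: (a, b1); (a, b2); (c, d); (c', d')] <= P}.
  by move=> v; rewrite !in_cons in_nil orbF => /or4P[]/eqP->; rewrite ?rowa.
have P4 : 4 <= #|P| := size_le U4 S4.
have Ua : (#|P| <= 4) -> universal e1 a.
  move=> hh; have F := fill U4 S4 hh.
  apply/forallP => x; apply/implyP => xa; apply/negPn/negP => nax.
  have Px : (x, b1) \in P by apply/negPn/negP => /cov; rewrite (esymm sG) (negbTE nax).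
  move: (F _ Px); memt.
  case/andP => /eqP xc _; move: nax; by rewrite xc ac'.
rewrite wE; split.
- by clear -P4; lia.
- by move=> h; clear -P4 h; lia.
- move=> h; have hh : #|P| <= 4 by clear -h; lia.
  have F := fill U4 S4 hh.
  have Hy : forall y, y \in [:: b1; b2] by move=> y; move: (F _ (rowa y)); memt; bfin.
  have h2 : m <= 2 := card_le_seq Hy.
  have K2H : isK2 e2 by apply: ord2_K2 => //; apply: le2eq => //; exact: gcard2 sH b1 nH.
  case: (leqP n 2) => hn.
    by right; split => //; apply: ord2_K2 => //; apply: le2eq => //; exact: gcard2 sG a nG.
  by left; apply: Or32; right; split => //; split => //; exists a; apply: Ua.
- move=> h; have hh : #|P| <= 5 by clear -h; lia.
  left; split.
    exists a; apply/forallP => x; apply/implyP => xa; apply/negPn/negP => nax.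
    have rowx y : (x, y) \in P by apply/negPn/negP => /cov; rewrite (esymm sG) (negbTE nax).
    have xc : x != c by apply: contraNneq nax => ->.
    have xc' : x != c' by apply: contraNneq nax => ->.
    have U6 : uniq [:: (a, b1); (a, b2); (c, d); (c', d'); (x, b1); (x, b2)] by uniqt.
    have S6 : {subset [:: (a, b1); (a, b2); (c, d); (c', d'); (x, b1); (x, b2)] <= P}.
      move=> v; rewrite !in_cons in_nil orbF => /orP[/eqP->|]; first exact: rowa.
      move=> /orP[/eqP->|]; first exact: rowa.
      move=> /orP[/eqP->//|] /orP[/eqP->//|] /orP[/eqP->|/eqP->]; exact: rowx.
    have P6 : 6 <= #|P| := size_le U6 S6.
    by clear -hh P6; lia.
  case: (boolP [forall y, y \in [:: b1; b2]]) => [/forallP Hy | /forallPn [y]].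
    by apply: (ord3_univ sH b1 nH); apply: leq_trans (card_le_seq Hy) _.
  rewrite !inE negb_or => /andP[yb1 yb2].
  have U5 : uniq [:: (a, b1); (a, b2); (c, d); (c', d'); (a, y)] by uniqt.
  have S5 : {subset [:: (a, b1); (a, b2); (c, d); (c', d'); (a, y)] <= P}.
    move=> v; rewrite !in_cons in_nil orbF => /orP[/eqP->|]; first exact: rowa.
    move=> /orP[/eqP->|]; first exact: rowa.
    by move=> /orP[/eqP->//|] /orP[/eqP->//|] /eqP->.
  have F := fill U5 S5 hh.
  have Hy : forall y', y' \in [:: b1; b2; y] by move=> y'; move: (F _ (rowa y')); memt; bfin.
  by apply: (ord3_univ sH b1 nH); apply: leq_trans (card_le_seq Hy) _.
Qed.

End Prod.

Section Prod.
Variables (T1 T2 : finType) (e1 : rel T1) (e2 : rel T2).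
Hypotheses (sG : simple_graph e1) (sH : simple_graph e2) (nG : no_isolated e1) (nH : no_isolated e2).
Variable f : {ffun T1 * T2 -> 'I_3}.
Hypothesis tf : trdf (direct_prod e1 e2) f.

Local Notation P := (Pset f).
Local Notation V2 := (V2set f).
Local Notation w := (trdf_weight f).
Local Notation n := #|T1|.
Local Notation m := #|T2|.
Let ir1 := irrf sG.
Let ir2 := irrf sH.
Let cov0 := coverP tf.
Let pnb := posnbP tf.

Lemma C2c a1 b1 a2 b2 : (a1, b1) \in V2 -> (a2, b2) \in V2 -> a1 != a2 -> b1 != b2 ->
  #|V2| = 2 -> Concl e1 e2 w.
Proof.
move=> V1 V2' a12 b12 c2.
have U2 : uniq [:: (a1, b1); (a2, b2)] by uniqt.
have S2 : {subset [:: (a1, b1); (a2, b2)] <= V2}.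
  by move=> v; rewrite !in_cons in_nil orbF => /orP[]/eqP->.
have F2 := fill U2 S2 (ltac:(by rewrite c2)).
have cov x y : (x, y) \notin P -> (e1 x a1 && e2 y b1) || (e1 x a2 && e2 y b2).
  move=> /cov0 [a' [b' [/F2]]]; rewrite !in_cons in_nil orbF !xpair_eqE.
  by move=> /orP[]/andP[/eqP-> /eqP->] -> ->; rewrite ?orbT.
have P21 : (a2, b1) \in P by apply/negPn/negP => /cov; rewrite ?ir1 ?ir2 ?andbF.
have P12 : (a1, b2) \in P by apply/negPn/negP => /cov; rewrite ?ir1 ?ir2 ?andbF.
have wE : w = #|P| + 2 by rewrite weightE c2.
have P11 : (a1, b1) \in P := V2P V1.
have P22 : (a2, b2) \in P := V2P V2'.
have U4 : uniq [:: (a1, b1); (a2, b2); (a1, b2); (a2, b1)] by uniqt.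
have S4 : {subset [:: (a1, b1); (a2, b2); (a1, b2); (a2, b1)] <= P}.
  by move=> v; rewrite !in_cons in_nil orbF => /or4P[]/eqP->.
have P4 : 4 <= #|P| := size_le U4 S4.
case: (boolP (e1 a1 a2 && e2 b1 b2)) => [/andP[A1 A2]| B].
  have colb1 x : (x, b1) \notin P -> e1 x a2.
    by move/cov; rewrite ir2 andbF /= => /andP[].
  have colb2 x : (x, b2) \notin P -> e1 x a1.
    by move/cov; rewrite ir2 andbF orbF => /andP[].
  have rowa1 y : (a1, y) \notin P -> e2 y b2.
    by move/cov; rewrite ir1 /= A1 /=.
  have rowa2 y : (a2, y) \notin P -> e2 y b1.
    by move/cov; rewrite (ir1 a2) andFb orbF => /andP[].
  have A1' : e1 a2 a1 by rewrite (esymm sG).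
  have A2' : e2 b2 b1 by rewrite (esymm sH).
  rewrite wE; split.
  - by clear -P4; lia.
  - by move=> h; clear -P4 h; lia.
  - move=> h; have hh : #|P| <= 4 by clear -h; lia.
    have F := fill U4 S4 hh.
    have Ua2 : universal e1 a2.
      apply/forallP => x; apply/implyP => xa; apply/negPn/negP => nax.
      have Px : (x, b1) \in P by apply/negPn/negP => /colb1; rewrite (esymm sG) (negbTE nax).
      move: (F _ Px); memt => /eqP xa1; move: nax; by rewrite xa1 A1'.
    have Ua1 : universal e1 a1.
      apply/forallP => x; apply/implyP => xa; apply/negPn/negP => nax.
      have Px : (x, b2) \in P by apply/negPn/negP => /colb2; rewrite (esymm sG) (negbTE nax).
      move: (F _ Px); memt => /eqP xa1; move: nax; by rewrite xa1 A1.
    have Ub2 : universal e2 b2.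
      apply/forallP => y; apply/implyP => yb; apply/negPn/negP => nby.
      have Py : (a1, y) \in P by apply/negPn/negP => /rowa1; rewrite (esymm sH) (negbTE nby).
      move: (F _ Py); memt => /eqP yb1; move: nby; by rewrite yb1 A2'.
    have Ub1 : universal e2 b1.
      apply/forallP => y; apply/implyP => yb; apply/negPn/negP => nby.
      have Py : (a2, y) \in P by apply/negPn/negP => /rowa2; rewrite (esymm sH) (negbTE nby).
      move: (F _ Py); memt => /eqP yb1; move: nby; by rewrite yb1 A2.
    have UG : 2 <= #|universals e1|.
      have Su : {subset [:: a1; a2] <= universals e1}.
        by move=> v; rewrite !in_cons in_nil orbF => /orP[]/eqP->; rewrite inE.
      have Uu : uniq [:: a1; a2] by rewrite /= inE a12.
      exact: size_le Uu Su.
    have UH : 2 <= #|universals e2|.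
      have Su : {subset [:: b1; b2] <= universals e2}.
        by move=> v; rewrite !in_cons in_nil orbF => /orP[]/eqP->; rewrite inE.
      have Uu : uniq [:: b1; b2] by rewrite /= inE b12.
      exact: size_le Uu Su.
    case: (leqP 3 n) => hn; first by left; apply: Or31; split => //; split => //; left.
    case: (leqP 3 m) => hm; first by left; apply: Or31; split => //; split => //; right.
    right; split; apply: ord2_K2 => //; apply: le2eq.
    + by clear -hn; lia.
    + exact: gcard2 sG a1 nG.
    + by clear -hm; lia.
    + exact: gcard2 sH b1 nH.
  - move=> h; have hh : #|P| <= 5 by clear -h; lia.
    left; split.
      case: (boolP (universal e1 a1)) => [UU1|/forallPn [x1]]; first by exists a1.
      case: (boolP (universal e1 a2)) => [UU2|/forallPn [x2]]; first by exists a2.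
      rewrite !negb_imply => /andP[x2a n2] /andP[x1a n1].
      have P2 : (x2, b1) \in P by apply/negPn/negP => /colb1; rewrite (esymm sG) (negbTE n2).
      have P1 : (x1, b2) \in P by apply/negPn/negP => /colb2; rewrite (esymm sG) (negbTE n1).
      have x12 : x1 != a2 by apply: contraNneq n1 => ->.
      have x21 : x2 != a1 by apply: contraNneq n2 => ->.
      have U6 : uniq [:: (a1, b1); (a2, b2); (a1, b2); (a2, b1); (x2, b1); (x1, b2)] by uniqt.
      have S6 : {subset [:: (a1, b1); (a2, b2); (a1, b2); (a2, b1); (x2, b1); (x1, b2)] <= P}.
        move=> v; rewrite !in_cons in_nil orbF.
        by move=> /orP[/eqP->|/orP[/eqP->|/orP[/eqP->|/orP[/eqP->|/orP[/eqP->|/eqP->]]]]].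
      have P6 : 6 <= #|P| := size_le U6 S6.
      by clear -P6 hh; lia.
    case: (boolP (universal e2 b1)) => [UU1|/forallPn [y1]]; first by exists b1.
    case: (boolP (universal e2 b2)) => [UU2|/forallPn [y2]]; first by exists b2.
    rewrite !negb_imply => /andP[y2b n2] /andP[y1b n1].
    have P2 : (a1, y2) \in P by apply/negPn/negP => /rowa1; rewrite (esymm sH) (negbTE n2).
    have P1 : (a2, y1) \in P by apply/negPn/negP => /rowa2; rewrite (esymm sH) (negbTE n1).
    have y12 : y1 != b2 by apply: contraNneq n1 => ->.
    have y21 : y2 != b1 by apply: contraNneq n2 => ->.
    have U6 : uniq [:: (a1, b1); (a2, b2); (a1, b2); (a2, b1); (a1, y2); (a2, y1)] by uniqt.
    have S6 : {subset [:: (a1, b1); (a2, b2); (a1, b2); (a2, b1); (a1, y2); (a2, y1)] <= P}.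
      move=> v; rewrite !in_cons in_nil orbF.
      by move=> /orP[/eqP->|/orP[/eqP->|/orP[/eqP->|/orP[/eqP->|/orP[/eqP->|/eqP->]]]]].
    have P6 : 6 <= #|P| := size_le U6 S6.
    by clear -P6 hh; lia.
have [c [d [Pcd a1c b1d]]] := pnb (V2P V1).
have ca1 := adj_neq sG a1c; have db1 := adj_neq sH b1d.
have cd22 : ~~ ((c == a2) && (d == b2)).
  by apply: contra B => /andP[/eqP <- /eqP <-]; rewrite a1c b1d.
have U5 : uniq [:: (a1, b1); (a2, b2); (a1, b2); (a2, b1); (c, d)].
  rewrite /= !inE !xpair_eqE ?eqxx /=; neqs; rewrite ?andbF ?andFb /=.
  by rewrite andbT eq_sym [b2 == d]eq_sym cd22.
have S5 : {subset [:: (a1, b1); (a2, b2); (a1, b2); (a2, b1); (c, d)] <= P}.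
  move=> v; rewrite !in_cons in_nil orbF.
  by move=> /orP[/eqP->|/orP[/eqP->|/orP[/eqP->|/orP[/eqP->|/eqP->]]]].
have P5 : 5 <= #|P| := size_le U5 S5.
rewrite wE; split.
- by clear -P5; lia.
- by move=> h; clear -P5 h; lia.
- by move=> h; clear -P5 h; lia.
move=> h; have hh : #|P| <= 5 by clear -h; lia.
have F := fill U5 S5 hh.
have [c' [d' [Pcd' a2c' b2d']]] := pnb (V2P V2').
have [cc dd] : c' = c /\ d' = d.
  move: (F _ Pcd'); rewrite !inE !xpair_eqE.
  case/orP => [/andP[/eqP e1' /eqP e2']|]; first by move: B; rewrite -e1' -e2' (esymm sG) a2c' (esymm sH) b2d'.
  case/orP => [/andP[/eqP e1' /eqP e2']|]; first by move: a2c'; rewrite e1' ir1.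
  case/orP => [/andP[/eqP e1' /eqP e2']|]; first by move: b2d'; rewrite e2' ir2.
  case/orP => [/andP[/eqP e1' /eqP e2']|]; first by move: a2c'; rewrite e1' ir1.
  by move=> /andP[/eqP -> /eqP ->].
subst c' d'.
case: (boolP (e1 a1 a2)) => A1.
  have nb : ~~ e2 b1 b2 by move: B; rewrite A1.
  have Pc : (c, b1) \in P.
    by apply/negPn/negP => /cov; rewrite (ir2 b1) andbF /= (negbTE nb) andbF.
  move: (F _ Pc); rewrite !inE !xpair_eqE ?eqxx ?andbT.
  case/orP => [/eqP ce|]; first by move: a1c; rewrite ce ir1.
  rewrite (negbTE b12) andbF /=.
  rewrite ?andbF /=; case/orP => [/eqP ce|/eqP e].
    by move: a2c'; rewrite ce ir1.
  by move: db1; rewrite e eqxx.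
have Pd : (a1, d) \in P.
  by apply/negPn/negP => /cov; rewrite ir1 /= (negbTE A1).
move: (F _ Pd); rewrite !inE !xpair_eqE ?eqxx /= (negbTE a12) /= andbT.
case/or3P => [/eqP de|/eqP de|/eqP ce].
- by move: b1d; rewrite de ir2.
- by move: b2d'; rewrite de ir2.
- by move: a1c; rewrite ce ir1.
Qed.

End Prod.

Lemma ext1 (T : finType) (A : {set T}) (s : seq T) x0 : x0 \in s -> uniq s -> {subset s <= A} ->
  #|A| <= (size s).+1 -> exists z, z \in A /\ forall v, v \in A -> v \in z :: s.
Proof.
move=> xs us sA cA.
case: (boolP [forall v, (v \in A) ==> (v \in s)]) => [/forallP H|/forallPn [v]].
  exists x0; split; first exact: sA.
  by move=> v vA; rewrite inE (implyP (H v) vA) orbT.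
rewrite negb_imply => /andP[vA vs].
exists v; split => //; apply: fill => //=; first by rewrite vs.
by move=> y; rewrite inE => /orP[/eqP->|/sA].
Qed.

Lemma in3P (T : eqType) (v x1 x2 x3 : T) : v \in [:: x1; x2; x3] -> [\/ v = x1, v = x2 | v = x3].
Proof. by rewrite !inE => /or3P[]/eqP->; [apply: Or31|apply: Or32|apply: Or33]. Qed.
Lemma in4P (T : eqType) (v x1 x2 x3 x4 : T) : v \in [:: x1; x2; x3; x4] ->
  [\/ v = x1, v = x2, v = x3 | v = x4].
Proof. by rewrite !inE => /or4P[]/eqP->; [apply: Or41|apply: Or42|apply: Or43|apply: Or44]. Qed.

Section Prod.
Variables (T1 T2 : finType) (e1 : rel T1) (e2 : rel T2).
Hypotheses (sG : simple_graph e1) (sH : simple_graph e2) (nG : no_isolated e1) (nH : no_isolated e2).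
Variable f : {ffun T1 * T2 -> 'I_3}.
Hypothesis tf : trdf (direct_prod e1 e2) f.

Local Notation P := (Pset f).
Local Notation V2 := (V2set f).
Local Notation w := (trdf_weight f).
Local Notation n := #|T1|.
Local Notation m := #|T2|.
Let ir1 := irrf sG.
Let ir2 := irrf sH.
Let cov0 := coverP tf.
Let pnb := posnbP tf.

Lemma C3a_H a b1 b2 a3 b3 c d :
  (forall x y, (x, y) \notin P -> [\/ e1 x a /\ e2 y b1, e1 x a /\ e2 y b2 | e1 x a3 /\ e2 y b3]) ->
  (forall v, v \in P -> [\/ v = (c, d), v = (a, b1), v = (a, b2) | v = (a3, b3)]) ->
  b1 != b2 -> a3 != a -> e1 a a3 -> ~~ e2 b3 b1 -> (a, b1) \in P -> has_universal e2.
Proof.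
move=> cov FP b12 a3a aa3 n31 P1.
have n13 : e2 b1 b3 = false by rewrite (esymm sH) (negbTE n31).
have [c1 [d1 [Pc1 ac1 bd1]]] := pnb P1.
have [cc dd] : c1 = c /\ d1 = d.
  case: (FP _ Pc1) => [[-> ->]|[e _]|[e _]|[e1' e2']] //.
  - by move: ac1; rewrite e ir1.
  - by move: ac1; rewrite e ir1.
  - by move: bd1; rewrite e2' n13.
subst c1 d1.
have ca : c != a by apply: contraTneq ac1 => ->; rewrite ir1.
have Pab3 : (a, b3) \in P.
  apply/negPn/negP => /cov [[h _]|[h _]|[_ h]]; by move: h; rewrite ?ir1 ?ir2.
case: (FP _ Pab3) => [[e _]|[e]|[e]|[e]].
- by move: ca; rewrite e eqxx.
-
  subst b3; exists b1; apply/forallP => y; apply/implyP => yb1; apply/negPn/negP => nby.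
  have Pay : (a, y) \in P.
    apply/negPn/negP => /cov [[h _]|[h _]|[_ h]]; move: h; rewrite ?ir1 //.
    by rewrite (esymm sH) (negbTE nby).
  have yb2 : y = b2.
    case: (FP _ Pay) => [[e _]|[e]|[e]|[e _]] //.
    + by move: ca; rewrite e eqxx.
    + by move: yb1; rewrite e eqxx.
    + by move: a3a; rewrite e eqxx.
  subst y.
  have Pa32 : (a3, b2) \in P.
    apply/negPn/negP => /cov [[_ h]|[_ h]|[h _]]; move: h; rewrite ?ir1 ?ir2 //.
    by rewrite (esymm sH) (negbTE nby).
  case: (FP _ Pa32) => [/pair_equal_spec [_ e]|/pair_equal_spec [e _]|/pair_equal_spec [e _]|/pair_equal_spec [_ e]].
  + by move: nby; rewrite e bd1.
  + by move: a3a; rewrite e eqxx.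
  + by move: a3a; rewrite e eqxx.
  + by move: b12; rewrite e eqxx.
-
  subst b3.
  have Pa31 : (a3, b1) \in P.
    apply/negPn/negP => /cov [[_ h]|[_ h]|[h _]]; move: h; rewrite ?ir1 ?ir2 //.
    by rewrite n13.
  case: (FP _ Pa31) => [/pair_equal_spec [_ e]|/pair_equal_spec [e _]|/pair_equal_spec [e _]|/pair_equal_spec [_ e]].
  + by move: bd1; rewrite -e ir2.
  + by move: a3a; rewrite e eqxx.
  + by move: a3a; rewrite e eqxx.
  + by move: b12; rewrite e eqxx.
- by move: a3a; rewrite e eqxx.
Qed.


Lemma C3a a b1 b2 a3 b3 : (a, b1) \in V2 -> (a, b2) \in V2 -> (a3, b3) \in V2 ->
  b1 != b2 -> (a3, b3) != (a, b1) -> (a3, b3) != (a, b2) -> #|V2| = 3 -> Concl e1 e2 w.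
Proof.
move=> V1 V2' V3 b12 h31 h32 c3.
have h12 : (a, b1) != (a, b2) by rewrite xpair_eqE eqxx /= b12.
have U3 : uniq [:: (a, b1); (a, b2); (a3, b3)].
  by rewrite /= !inE negb_or h12 /= eq_sym h31 /= eq_sym h32.
have S3 : {subset [:: (a, b1); (a, b2); (a3, b3)] <= V2}.
  by move=> v /in3P [] ->.
have F3 := fill U3 S3 (ltac:(by rewrite c3)).
have cov x y : (x, y) \notin P -> [\/ e1 x a /\ e2 y b1, e1 x a /\ e2 y b2 | e1 x a3 /\ e2 y b3].
  move=> /cov0 [a' [b' [/F3 /in3P]]].
  by case=> [[-> ->]|[-> ->]|[-> ->]] h1 h2; [apply: Or31|apply: Or32|apply: Or33].
have P1 : (a, b1) \in P := V2P V1.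
have P2 : (a, b2) \in P := V2P V2'.
have P3 : (a3, b3) \in P := V2P V3.
have S3P : {subset [:: (a, b1); (a, b2); (a3, b3)] <= P}.
  by move=> v /in3P [] ->.
have Pg3 : 3 <= #|P| := size_le U3 S3P.
have wE : w = #|P| + 3 by rewrite weightE c3.
rewrite wE; split.
- by clear -Pg3; lia.
- by move=> h; clear -Pg3 h; lia.
- move=> h; have hh : #|P| <= 3 by clear -h; lia.
  have FP := fill U3 S3P hh.
  exfalso.
  have [c [d [Pcd ac b1d]]] := pnb P1.
  have [ca3 db3] : c = a3 /\ d = b3.
    case: (in3P (FP _ Pcd)) => [/pair_equal_spec [e _]|/pair_equal_spec [e _]|/pair_equal_spec [-> ->]] //;
    by move: ac; rewrite e ir1.
  subst c d.
  have [c' [d' [Pcd' ac' b2d']]] := pnb P2.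
  have [ca3 db3] : c' = a3 /\ d' = b3.
    case: (in3P (FP _ Pcd')) => [/pair_equal_spec [e _]|/pair_equal_spec [e _]|/pair_equal_spec [-> ->]] //;
    by move: ac'; rewrite e ir1.
  subst c' d'.
  have Pab3 : (a, b3) \in P.
    apply/negPn/negP => /cov [[h' _]|[h' _]|[_ h']]; by move: h'; rewrite ?ir1 ?ir2.
  case: (in3P (FP _ Pab3)) => [/pair_equal_spec [_ e]|/pair_equal_spec [_ e]|/pair_equal_spec [e _]].
  + by move: b1d; rewrite e ir2.
  + by move: b2d'; rewrite e ir2.
  + by move: ac; rewrite e ir1.
move=> h; have hh : #|P| <= 4 by clear -h; lia.
have xs : (a, b1) \in [:: (a, b1); (a, b2); (a3, b3)] by rewrite inE eqxx.
have [[c d] [Pz FPz]] := ext1 xs U3 S3P hh.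
have FP v : v \in P -> [\/ v = (c, d), v = (a, b1), v = (a, b2) | v = (a3, b3)].
  by move/FPz; rewrite (in_cons (c, d)) => /orP[/eqP->|/in3P[]->]; [apply: Or41|apply: Or42|apply: Or43|apply: Or44].
have a3a : a3 != a.
  apply/negP => /eqP e; subst a3.
  have onlyz c1 d1 : (c1, d1) \in P -> e1 a c1 -> c1 = c /\ d1 = d.
    move=> /FP [/pair_equal_spec //|/pair_equal_spec [e _]|/pair_equal_spec [e _]|/pair_equal_spec [e _]];
    by rewrite e ir1.
  have [c1 [d1 [Pc1 ac1 bd1]]] := pnb P1.
  have [? ?] := onlyz _ _ Pc1 ac1; subst c1 d1.
  have [c2 [d2 [Pc2 ac2 bd2]]] := pnb P2.
  have [? ?] := onlyz _ _ Pc2 ac2; subst c2 d2.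
  have [c5 [d5 [Pc3 ac3 bd3]]] := pnb P3.
  have [? ?] := onlyz _ _ Pc3 ac3; subst c5 d5.
  have Pad : (a, d) \in P.
    by apply/negPn/negP => /cov [[h' _]|[h' _]|[h' _]]; move: h'; rewrite ir1.
  case: (FP _ Pad) => [/pair_equal_spec [e _]|/pair_equal_spec [_ e]|/pair_equal_spec [_ e]|/pair_equal_spec [_ e]].
  + by move: ac1; rewrite e ir1.
  + by move: bd1; rewrite e ir2.
  + by move: bd2; rewrite e ir2.
  + by move: bd3; rewrite e ir2.
have Ua : universal e1 a.
  apply/forallP => x; apply/implyP => xa; apply/negPn/negP => nax.
  have nxa : e1 x a = false by rewrite (esymm sG) (negbTE nax).
  case: (eqVneq x a3) => [xa3|xa3].
    subst x.
    have onlyz c1 d1 : (c1, d1) \in P -> e1 a c1 -> c1 = c /\ d1 = d.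
      move=> /FP [/pair_equal_spec //|/pair_equal_spec [e _]|/pair_equal_spec [e _]|/pair_equal_spec [e _]];
      by rewrite e ?ir1 // (negbTE nax).
    have [c1 [d1 [Pc1 ac1 bd1]]] := pnb P1.
    have [? ?] := onlyz _ _ Pc1 ac1; subst c1 d1.
    have [c2 [d2 [Pc2 ac2 bd2]]] := pnb P2.
    have [? ?] := onlyz _ _ Pc2 ac2; subst c2 d2.
    have Pa31 : (a3, b1) \in P.
      by apply/negPn/negP => /cov [[h' _]|[h' _]|[h' _]]; move: h'; rewrite ?nxa ?ir1.
    have Pa32 : (a3, b2) \in P.
      by apply/negPn/negP => /cov [[h' _]|[h' _]|[h' _]]; move: h'; rewrite ?nxa ?ir1.
    have E1 : b1 = b3.
      case: (FP _ Pa31) => [/pair_equal_spec [_ e]|/pair_equal_spec [e _]|/pair_equal_spec [e _]|/pair_equal_spec [_ e]] //.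
      + by move: bd1; rewrite e ir2.
      + by move: a3a; rewrite e eqxx.
      + by move: a3a; rewrite e eqxx.
    have E2 : b2 = b3.
      case: (FP _ Pa32) => [/pair_equal_spec [_ e]|/pair_equal_spec [e _]|/pair_equal_spec [e _]|/pair_equal_spec [_ e]] //.
      + by move: bd2; rewrite e ir2.
      + by move: a3a; rewrite e eqxx.
      + by move: a3a; rewrite e eqxx.
    by move: b12; rewrite E1 E2 eqxx.
  have Px : (x, b3) \in P.
    by apply/negPn/negP => /cov [[h' _]|[h' _]|[_ h']]; move: h'; rewrite ?nxa ?ir2.
  have [cx dx] : c = x /\ d = b3.
    case: (FP _ Px) => [/pair_equal_spec [-> ->]|/pair_equal_spec [e _]|/pair_equal_spec [e _]|/pair_equal_spec [e _]] //.
    + by move: xa; rewrite e eqxx.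
    + by move: xa; rewrite e eqxx.
    + by move: xa3; rewrite e eqxx.
  subst c d.
  have [c2 [d2 [Pc2 xc2 bd2]]] := pnb Pz.
  case: (FP _ Pc2) => [/pair_equal_spec [e _]|/pair_equal_spec [e _]|/pair_equal_spec [e _]|/pair_equal_spec [_ e]].
  + by move: xc2; rewrite e ir1.
  + by move: xc2; rewrite e nxa.
  + by move: xc2; rewrite e nxa.
  + by move: bd2; rewrite e ir2.
have aa3 : e1 a a3 by move/forallP: Ua => /(_ a3) /implyP; apply.
left; split; first by exists a.
have cov' x y : (x, y) \notin P ->
    [\/ e1 x a /\ e2 y b2, e1 x a /\ e2 y b1 | e1 x a3 /\ e2 y b3].
  by move/cov => [] ?; [apply: Or32|apply: Or31|apply: Or33].
have FP' v : v \in P -> [\/ v = (c, d), v = (a, b2), v = (a, b1) | v = (a3, b3)].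
  by move/FP => [] ?; [apply: Or41|apply: Or43|apply: Or42|apply: Or44].
case: (boolP (e2 b3 b1)) => h1; last exact: (C3a_H cov FP b12 a3a aa3 h1 P1).
case: (boolP (e2 b3 b2)) => h2; last by apply: (C3a_H cov' FP' _ a3a aa3 h2 P2); rewrite eq_sym.
have Pab3 : (a, b3) \in P.
  apply/negPn/negP => /cov [[h' _]|[h' _]|[_ h']]; by move: h'; rewrite ?ir1 ?ir2.
have [ca db3] : c = a /\ d = b3.
  case: (FP _ Pab3) => [/pair_equal_spec [-> ->]|/pair_equal_spec [_ e]|/pair_equal_spec [_ e]|/pair_equal_spec [e _]] //.
  + by move: h1; rewrite e ir2.
  + by move: h2; rewrite e ir2.
  + by move: a3a; rewrite e eqxx.
subst c d.
exists b3; apply/forallP => y; apply/implyP => yb3; apply/negPn/negP => nby.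
have Pay : (a, y) \in P.
  apply/negPn/negP => /cov [[h' _]|[h' _]|[_ h']]; move: h'; rewrite ?ir1 //.
  by rewrite (esymm sH) (negbTE nby).
case: (FP _ Pay) => [/pair_equal_spec [_ e]|/pair_equal_spec [_ e]|/pair_equal_spec [_ e]|/pair_equal_spec [e _]].
+ by move: yb3; rewrite e eqxx.
+ by move: nby; rewrite e h1.
+ by move: nby; rewrite e h2.
+ by move: a3a; rewrite e eqxx.
Qed.

End Prod.

Section Prod.
Variables (T1 T2 : finType) (e1 : rel T1) (e2 : rel T2).
Hypotheses (sG : simple_graph e1) (sH : simple_graph e2) (nG : no_isolated e1) (nH : no_isolated e2).
Variable f : {ffun T1 * T2 -> 'I_3}.
Hypothesis tf : trdf (direct_prod e1 e2) f.

Local Notation P := (Pset f).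
Local Notation V2 := (V2set f).
Local Notation w := (trdf_weight f).
Local Notation n := #|T1|.
Local Notation m := #|T2|.
Let ir1 := irrf sG.
Let ir2 := irrf sH.
Let cov0 := coverP tf.
Let pnb := posnbP tf.

Lemma edge_aux a1 b1 a2 b2 a3 b3 c d :
  (forall x y, (x, y) \notin P -> [\/ e1 x a1 /\ e2 y b1, e1 x a2 /\ e2 y b2 | e1 x a3 /\ e2 y b3]) ->
  (forall v, v \in P -> [\/ v = (c, d), v = (a1, b1), v = (a2, b2) | v = (a3, b3)]) ->
  a1 != a2 -> a1 != a3 -> a2 != a3 -> b1 != b3 -> b2 != b3 -> e1 a1 a2.
Proof.
move=> cov FP a12 a13 a23 b13 b23.
case: (eqVneq (a1, b3) (c, d)) => [e|ne].
  have N : (a2, b3) \notin P.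
    apply/negP => /FP [/pair_equal_spec [e' _]|/pair_equal_spec [e' _]|/pair_equal_spec [_ e']|/pair_equal_spec [e' _]].
    - by move: e => /pair_equal_spec [e'' _]; move: a12; rewrite e'' e' eqxx.
    - by move: a12; rewrite e' eqxx.
    - by move: b23; rewrite e' eqxx.
    - by move: a23; rewrite e' eqxx.
  case: (cov _ _ N) => [[h _]|[h _]|[_ h]]; first by rewrite (esymm sG).
  - by move: h; rewrite ir1.
  - by move: h; rewrite ir2.
have N : (a1, b3) \notin P.
  apply/negP => /FP [e'|/pair_equal_spec [_ e']|/pair_equal_spec [e' _]|/pair_equal_spec [e' _]].
  - by move: ne; rewrite e' eqxx.
  - by move: b13; rewrite e' eqxx.
  - by move: a12; rewrite e' eqxx.
  - by move: a13; rewrite e' eqxx.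
case: (cov _ _ N) => [[h _]|[h _]|[_ h]] //.
- by move: h; rewrite ir1.
- by move: h; rewrite ir2.
Qed.

Lemma vert_aux a1 b1 a2 b2 a3 b3 c d v :
  (forall x y, (x, y) \notin P -> [\/ e1 x a1 /\ e2 y b1, e1 x a2 /\ e2 y b2 | e1 x a3 /\ e2 y b3]) ->
  (forall v, v \in P -> [\/ v = (c, d), v = (a1, b1), v = (a2, b2) | v = (a3, b3)]) ->
  (c, d) \in P -> b1 != b2 -> b1 != b3 -> e1 a1 a2 -> ~~ e1 v a2 -> ~~ e1 v a3 -> False.
Proof.
move=> cov FP Pz b12 b13 E12 n2 n3.
have Pv : (v, b1) \in P.
  apply/negPn/negP => /cov [[_ h]|[h _]|[h _]]; move: h; by rewrite ?ir2 ?(negbTE n2) ?(negbTE n3).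
case: (FP _ Pv) => [/pair_equal_spec [e1' e2']|/pair_equal_spec [e _]|/pair_equal_spec [_ e]|/pair_equal_spec [_ e]].
- subst c d.
  have [c' [d' [Pc' vc bd]]] := pnb Pz.
  case: (FP _ Pc') => [/pair_equal_spec [e _]|/pair_equal_spec [_ e]|/pair_equal_spec [e _]|/pair_equal_spec [e _]].
  + by move: vc; rewrite e ir1.
  + by move: bd; rewrite e ir2.
  + by move: vc; rewrite e (negbTE n2).
  + by move: vc; rewrite e (negbTE n3).
- by move: n2; rewrite e E12.
- by move: b12; rewrite e eqxx.
- by move: b13; rewrite e eqxx.
Qed.

Lemma C3c a1 b1 a2 b2 a3 b3 : (a1, b1) \in V2 -> (a2, b2) \in V2 -> (a3, b3) \in V2 ->
  a1 != a2 -> a1 != a3 -> a2 != a3 -> b1 != b2 -> b1 != b3 -> b2 != b3 -> #|V2| = 3 ->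
  6 <= w /\ (w <= 7 -> triangle_centered e1).
Proof.
move=> V1 V2' V3 a12 a13 a23 b12 b13 b23 c3.
have U3 : uniq [:: (a1, b1); (a2, b2); (a3, b3)] by uniqt.
have S3 : {subset [:: (a1, b1); (a2, b2); (a3, b3)] <= V2}.
  by move=> v /in3P [] ->.
have F3 := fill U3 S3 (ltac:(by rewrite c3)).
have cov x y : (x, y) \notin P -> [\/ e1 x a1 /\ e2 y b1, e1 x a2 /\ e2 y b2 | e1 x a3 /\ e2 y b3].
  move=> /cov0 [a' [b' [/F3 /in3P]]].
  by case=> [[-> ->]|[-> ->]|[-> ->]] h1 h2; [apply: Or31|apply: Or32|apply: Or33].
have P1 : (a1, b1) \in P := V2P V1.
have P2 : (a2, b2) \in P := V2P V2'.
have P3 : (a3, b3) \in P := V2P V3.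
have S3P : {subset [:: (a1, b1); (a2, b2); (a3, b3)] <= P}.
  by move=> v /in3P [] ->.
have Pg3 : 3 <= #|P| := size_le U3 S3P.
have wE : w = #|P| + 3 by rewrite weightE c3.
rewrite wE; split; first by clear -Pg3; lia.
move=> h; have hh : #|P| <= 4 by clear -h; lia.
have xs : (a1, b1) \in [:: (a1, b1); (a2, b2); (a3, b3)] by rewrite inE eqxx.
have [[c d] [Pz FPz]] := ext1 xs U3 S3P hh.
have FP v : v \in P -> [\/ v = (c, d), v = (a1, b1), v = (a2, b2) | v = (a3, b3)].
  by move/FPz; rewrite (in_cons (c, d)) => /orP[/eqP->|/in3P[]->]; [apply: Or41|apply: Or42|apply: Or43|apply: Or44].
have a21 : a2 != a1 by rewrite eq_sym. have a31 : a3 != a1 by rewrite eq_sym.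
have a32 : a3 != a2 by rewrite eq_sym. have b21 : b2 != b1 by rewrite eq_sym.
have b31 : b3 != b1 by rewrite eq_sym. have b32 : b3 != b2 by rewrite eq_sym.
have covP (x1 y1 x2 y2 x3 y3 : _) :
  (forall x y, (x, y) \notin P -> [\/ e1 x x1 /\ e2 y y1, e1 x x2 /\ e2 y y2 | e1 x x3 /\ e2 y y3]) ->
  (forall x y, (x, y) \notin P -> [\/ e1 x x2 /\ e2 y y2, e1 x x1 /\ e2 y y1 | e1 x x3 /\ e2 y y3]) /\
  (forall x y, (x, y) \notin P -> [\/ e1 x x1 /\ e2 y y1, e1 x x3 /\ e2 y y3 | e1 x x2 /\ e2 y y2]).
  move=> C; split => x y /C [] ?; by [apply: Or31|apply: Or32|apply: Or33].
have FPP (x1 x2 x3 : T1 * T2) :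
  (forall v, v \in P -> [\/ v = (c, d), v = x1, v = x2 | v = x3]) ->
  (forall v, v \in P -> [\/ v = (c, d), v = x2, v = x1 | v = x3]) /\
  (forall v, v \in P -> [\/ v = (c, d), v = x1, v = x3 | v = x2]).
  move=> C; split => v /C [] ?; by [apply: Or41|apply: Or42|apply: Or43|apply: Or44].
have [cov213 cov132] := covP _ _ _ _ _ _ cov.
have [FP213 FP132] := FPP _ _ _ FP.
have [_ cov231] := covP _ _ _ _ _ _ cov213.
have [_ FP231] := FPP _ _ _ FP213.
have [cov312 _] := covP _ _ _ _ _ _ cov132.
have [FP312 _] := FPP _ _ _ FP132.
have E12 : e1 a1 a2 := edge_aux cov FP a12 a13 a23 b13 b23.
have E13 : e1 a1 a3 := edge_aux cov132 FP132 a13 a12 a32 b12 b32.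
have E23 : e1 a2 a3 := edge_aux cov231 FP231 a23 a21 a31 b21 b31.
have E21 : e1 a2 a1 by rewrite (esymm sG).
have E31 : e1 a3 a1 by rewrite (esymm sG).
exists a1, a2, a3; split => // v.
case E1: (e1 v a1); case E2: (e1 v a2); case E3: (e1 v a3) => //=; exfalso.
- by apply: (vert_aux (v := v) cov FP Pz b12 b13 E12); rewrite ?E2 ?E3.
- by apply: (vert_aux (v := v) cov213 FP213 Pz b21 b23 E21); rewrite ?E1 ?E3.
- by apply: (vert_aux (v := v) cov312 FP312 Pz b31 b32 E31); rewrite ?E1 ?E2.
- by apply: (vert_aux (v := v) cov FP Pz b12 b13 E12); rewrite ?E2 ?E3.
Qed.

End Prod.

Section Swap.
Variables (T1 T2 : finType) (e1 : rel T1) (e2 : rel T2).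
Variable f : {ffun T1 * T2 -> 'I_3}.
Definition fsw : {ffun T2 * T1 -> 'I_3} := [ffun v => f (v.2, v.1)].

Lemma fswE y x : fsw (y, x) = f (x, y).
Proof. by rewrite /fsw ffunE. Qed.

Lemma sum_sw (F : T1 * T2 -> nat) : \sum_(v : T2 * T1) F (v.2, v.1) = \sum_(v : T1 * T2) F v.
Proof.
rewrite (reindex (fun v : T1 * T2 => (v.2, v.1))) /=.
  by apply: eq_bigr => [[]].
by exists (fun v : T2 * T1 => (v.2, v.1)) => [[]|[]].
Qed.

Lemma fsw_weight : trdf_weight fsw = trdf_weight f.
Proof.
rewrite /trdf_weight -(sum_sw (fun v => val (f v))); apply: eq_bigr => [[y x]] _.
by rewrite fswE.
Qed.

Lemma fsw_V2 y x : ((y, x) \in V2set fsw) = ((x, y) \in V2set f).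
Proof. by rewrite !inE fswE. Qed.

Lemma fsw_cardV2 : #|V2set fsw| = #|V2set f|.
Proof.
rewrite -!sum_set -(sum_sw (fun v => (v \in V2set f : nat))); apply: eq_bigr => [[y x]] _.
by rewrite fsw_V2.
Qed.

Lemma fsw_trdf : trdf (direct_prod e1 e2) f -> trdf (direct_prod e2 e1) fsw.
Proof.
case/andP => /forallP H0 /forallP H1; apply/andP; split; apply/forallP => [[y x]].
- rewrite fswE; apply/implyP => /(implyP (H0 (x, y))) /existsP [[a b]].
  rewrite /direct_prod /= => /andP[/andP[xa yb] ab].
  by apply/existsP; exists (b, a); rewrite /direct_prod /= yb xa fswE.
- rewrite fswE; apply/implyP => /(implyP (H1 (x, y))) /existsP [[a b]].
  rewrite /direct_prod /= => /andP[/andP[xa yb] ab].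
  by apply/existsP; exists (b, a); rewrite /direct_prod /= yb xa fswE.
Qed.
End Swap.

Lemma LBmain (T1 T2 : finType) (e1 : rel T1) (e2 : rel T2)
  (sG : simple_graph e1) (sH : simple_graph e2) (nG : no_isolated e1) (nH : no_isolated e2)
  (f : {ffun T1 * T2 -> 'I_3}) (tf : trdf (direct_prod e1 e2) f) (x0 : T1) (y0 : T2) :
  Concl e1 e2 (trdf_weight f).
Proof.
have tfs := fsw_trdf tf.
have wsw := fsw_weight f.
have csw := fsw_cardV2 f.
have Vsw := fsw_V2 f.
have swap : Concl e2 e1 (trdf_weight (fsw f)) -> Concl e1 e2 (trdf_weight f).
  by rewrite wsw; apply: ConclC.
have wE := weightE f.
have VP := V2leP f.
case: (ltnP #|V2set f| 4) => [k4|k4]; last first.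
  have w8 : 8 <= trdf_weight f by rewrite wE; clear -k4 VP; lia.
  by split; [clear -w8; lia | move=> h; exfalso; clear -w8 h; lia
            | move=> h; exfalso; clear -w8 h; lia | move=> h; exfalso; clear -w8 h; lia].
have [k0|k1|k2|k3] : [\/ #|V2set f| = 0, #|V2set f| = 1, #|V2set f| = 2 | #|V2set f| = 3].
  move: k4; clear; move: (#|V2set f|) => k.
  case: k => [|[|[|[|k]]]] h; [apply: Or41|apply: Or42|apply: Or43|apply: Or44|by move: h; rewrite !ltnS ltn0] => //.
- by apply: (C0 sG sH nG nH tf x0 y0).
- have /cards1P [[a b] E] : #|V2set f| == 1 by rewrite k1.
  exact: (C1 sG sH nG nH tf E).
- have /cards2P [[a1 b1] [[a2 b2] [p12 E]]] : #|V2set f| == 2 by rewrite k2.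
  have V1 : (a1, b1) \in V2set f by rewrite E !inE eqxx.
  have V2 : (a2, b2) \in V2set f by rewrite E !inE eqxx orbT.
  case: (eqVneq a1 a2) => [ea|na].
    subst a2; apply: (C2a sG sH nG nH tf V1 V2 _ k2).
    by move: p12; rewrite xpair_eqE eqxx.
  case: (eqVneq b1 b2) => [eb|nb]; last exact: (C2c sG sH nG nH tf V1 V2 na nb k2).
  subst b2; apply: swap.
  apply: (C2a sH sG nH nG tfs (a := b1) (b1 := a1) (b2 := a2)); rewrite ?Vsw ?csw //.
- have [p1 P1] : exists p1, p1 \in V2set f.
    by apply/set0Pn; rewrite -card_gt0 k3.
  have /cards2P [p2 [p3 [p23 E]]] : #|V2set f :\ p1| == 2.
    have hc := cardsD1 p1 (V2set f); rewrite P1 k3 /= add1n in hc; by case: hc => <-.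
  have : p2 \in V2set f :\ p1 by rewrite E !inE eqxx.
  have : p3 \in V2set f :\ p1 by rewrite E !inE eqxx orbT.
  rewrite !in_setD1 => /andP[p31 P3] /andP[p21 P2].
  clear E.
  case: p1 P1 p31 p21 => a1 b1 P1 p31 p21.
  case: p2 P2 p21 p23 => a2 b2 P2 p21 p23.
  case: p3 P3 p31 p23 => a3 b3 P3 p31 p23.
  move: p21 p31 p23; rewrite !xpair_eqE => p21 p31 p23.
  have dn (x y : T1) (u v : T2) : ~~ ((x == y) && (u == v)) -> (y, v) != (x, u).
    by move=> h; rewrite xpair_eqE eq_sym [v == u]eq_sym.
  have dn' (x y : T1) (u v : T2) : ~~ ((x == y) && (u == v)) -> (x, u) != (y, v).
    by move=> h; rewrite xpair_eqE.
  have dnT (x : T1) (u v : T2) : ~~ ((x == x) && (u == v)) -> u != v.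
    by rewrite eqxx.
  have dnT' (x : T1) (u v : T2) : ~~ ((x == x) && (u == v)) -> v != u.
    by rewrite eqxx eq_sym.
  have sw (x y : T1) (u v : T2) : x != y -> (u, x) != (v, y).
    by move=> h; rewrite xpair_eqE (negbTE h) andbF.
  case: (eqVneq a1 a2) => [ea12|na12].
    subst a2; apply: (C3a sG sH tf P1 P2 P3 (dnT' _ _ _ p21) (dn' _ _ _ _ p31) (dn _ _ _ _ p23) k3).
  case: (eqVneq a1 a3) => [ea13|na13].
    subst a3; apply: (C3a sG sH tf P1 P3 P2 (dnT' _ _ _ p31) (dn' _ _ _ _ p21) (dn' _ _ _ _ p23) k3).
  case: (eqVneq a2 a3) => [ea23|na23].
    subst a3; apply: (C3a sG sH tf P2 P3 P1 (dnT _ _ _ p23) (dn _ _ _ _ p21) (dn _ _ _ _ p31) k3).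
  have na21 : a2 != a1 by rewrite eq_sym.
  have na31 : a3 != a1 by rewrite eq_sym.
  have na32 : a3 != a2 by rewrite eq_sym.
  have P1' : (b1, a1) \in V2set (fsw f) by rewrite Vsw.
  have P2' : (b2, a2) \in V2set (fsw f) by rewrite Vsw.
  have P3' : (b3, a3) \in V2set (fsw f) by rewrite Vsw.
  have k3' : #|V2set (fsw f)| = 3 by rewrite csw.
  case: (eqVneq b1 b2) => [eb12|nb12].
    subst b2; apply: swap.
    exact: (C3a sH sG tfs P1' P2' P3' na12 (sw _ _ _ _ na31) (sw _ _ _ _ na32) k3').
  case: (eqVneq b1 b3) => [eb13|nb13].
    subst b3; apply: swap.
    exact: (C3a sH sG tfs P1' P3' P2' na13 (sw _ _ _ _ na21) (sw _ _ _ _ na23) k3').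
  case: (eqVneq b2 b3) => [eb23|nb23].
    subst b3; apply: swap.
    exact: (C3a sH sG tfs P2' P3' P1' na23 (sw _ _ _ _ na12) (sw _ _ _ _ na13) k3').
  have [w6 tc1] := C3c sG sH tf P1 P2 P3 na12 na13 na23 nb12 nb13 nb23 k3.
  have [_ tc2] := C3c sH sG tfs P1' P2' P3' nb12 nb13 nb23 na12 na13 na23 (ltac:(by rewrite csw)).
  rewrite wsw in tc2.
  split.
  + by clear -w6; lia.
  + by move=> h; clear -w6 h; lia.
  + by move=> h; left; apply: Or33; split; [apply: tc1 | apply: tc2]; clear -h; lia.
  + by move=> h; right; split; [apply: tc1 | apply: tc2]; clear -h; lia.
Qed.

Section UB.
Variables (T1 T2 : finType) (e1 : rel T1) (e2 : rel T2).
Hypotheses (sG : simple_graph e1) (sH : simple_graph e2) (nG : no_isolated e1) (nH : no_isolated e2).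
Local Notation E := (direct_prod e1 e2).

Lemma univ1 (u x : T1) : universal e1 u -> x != u -> e1 x u.
Proof. by move=> /forallP /(_ x) /implyP H /H; rewrite (esymm sG). Qed.
Lemma univ2 (u x : T2) : universal e2 u -> x != u -> e2 x u.
Proof. by move=> /forallP /(_ x) /implyP H /H; rewrite (esymm sH). Qed.

Lemma prod_noiso : no_isolated E.
Proof.
move=> [x y]; have [x' xx] := nG x; have [y' yy] := nH y.
by exists (x', y'); rewrite /direct_prod /= xx yy.
Qed.

Lemma mkUB' (s1 s2 : seq (T1 * T2)) :
  (forall v, v \notin s1 -> v \notin s2 -> exists2 u, u \in s2 & E v u) ->
  (forall v, v \in s1 ++ s2 -> exists2 u, u \in s1 ++ s2 & E v u) ->
  gamma_tR E <= size s1 + (size s2).*2.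
Proof.
move=> H0 H1; apply: mkUB => v.
- by move=> /H0 h /h [u ? ?]; exists u.
- by move=> /H1 [u ? ?]; exists u.
Qed.

Lemma UB_dom (s2 : seq (T1 * T2)) : (forall v, exists2 u, u \in s2 & E v u) ->
  gamma_tR E <= (size s2).*2.
Proof.
move=> H; have := @mkUB' [::] s2 (fun v _ _ => H v) (fun v _ => H v).
by rewrite add0n.
Qed.

Lemma UB_K2 : isK2 e1 -> isK2 e2 -> gamma_tR E <= 4.
Proof.
move=> [c1 _] [c2 _]; apply: leq_trans (UB_all prod_noiso) _.
by rewrite card_prod c1 c2.
Qed.

Lemma UB_iii1 : 2 <= #|universals e1| -> 2 <= #|universals e2| -> gamma_tR E <= 6.
Proof.
move=> h1 h2.
have [u1 [u2 [u12 [U1 U2]]]] : exists u1 u2, u1 != u2 /\ universal e1 u1 /\ universal e1 u2.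
  have [u1 Hu1] : exists u, u \in universals e1.
    by apply/set0Pn; rewrite -card_gt0; apply: leq_trans h1.
  have [u2 Hu2] : exists u, u \in universals e1 :\ u1.
    have hc := cardsD1 u1 (universals e1); rewrite Hu1 /= in hc.
    by apply/set0Pn; rewrite -card_gt0; move: h1; rewrite hc add1n ltnS.
  move: Hu2; rewrite in_setD1 => /andP[u21 Hu2].
  by exists u1, u2; move: Hu1 Hu2; rewrite !inE eq_sym => -> ->.
have [w1 [w2 [w12 [W1 W2]]]] : exists t1 t2, t1 != t2 /\ universal e2 t1 /\ universal e2 t2.
  have [t1 Ht1] : exists t, t \in universals e2.
    by apply/set0Pn; rewrite -card_gt0; apply: leq_trans h2.
  have [t2 Ht2] : exists t, t \in universals e2 :\ t1.
    have hc := cardsD1 t1 (universals e2); rewrite Ht1 /= in hc.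
    by apply/set0Pn; rewrite -card_gt0; move: h2; rewrite hc add1n ltnS.
  move: Ht2; rewrite in_setD1 => /andP[t21 Ht2].
  by exists t1, t2; move: Ht1 Ht2; rewrite !inE eq_sym => -> ->.
have a12 : e1 u1 u2 by apply: univ1 => //; rewrite eq_sym.
have a21 : e1 u2 u1 by rewrite (esymm sG).
have b12 : e2 w1 w2 by apply: univ2 => //; rewrite eq_sym.
have b21 : e2 w2 w1 by rewrite (esymm sH).
apply: (@mkUB' [:: (u1, w2); (u2, w1)] [:: (u1, w1); (u2, w2)]) => [[x y]|v].
- rewrite !inE !xpair_eqE negb_or => /andP[n1 n2] _.
  case: (eqVneq x u1) => [xu1|xu1].
    subst x; move: n1; rewrite eqxx /= => yw2.
    exists (u2, w2); first by rewrite !inE eqxx orbT.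
    by rewrite /direct_prod /= a12 univ2.
  case: (eqVneq y w1) => [yw1|yw1].
    subst y; move: n2; rewrite eqxx andbT => xu2.
    exists (u2, w2); first by rewrite !inE eqxx orbT.
    by rewrite /direct_prod /= b12 univ1.
  exists (u1, w1); first by rewrite !inE eqxx.
  by rewrite /direct_prod /= univ1 // univ2.
- rewrite /= !inE => /or4P[]/eqP->.
  + by exists (u2, w1); rewrite ?inE ?eqxx ?orbT // /direct_prod /= a12 b21.
  + by exists (u1, w2); rewrite ?inE ?eqxx ?orbT // /direct_prod /= a21 b12.
  + by exists (u2, w2); rewrite ?inE ?eqxx ?orbT // /direct_prod /= a12 b12.
  + by exists (u1, w1); rewrite ?inE ?eqxx ?orbT // /direct_prod /= a21 b21.
Qed.

Lemma UB_iii2 : isK2 e1 -> has_universal e2 -> gamma_tR E <= 6.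
Proof.
move=> [c1 K] [w W].
have [a [b [ab Eab]]] : exists a b, a != b /\ [set: T1] = [set a; b].
  by apply/cards2P; rewrite cardsT c1.
have oth x : exists2 x', x' \in [:: a; b] & e1 x x'.
  have : x \in [set a; b] by rewrite -Eab inE.
  rewrite !inE => /orP[]/eqP->; [exists b | exists a]; rewrite ?inE ?eqxx ?orbT //; apply: K => //.
  by rewrite eq_sym.
have [y wy] := nH w.
have yw : y != w by rewrite eq_sym (adj_neq sH wy).
have eab : e1 a b by apply: K.
have eba : e1 b a by rewrite (esymm sG).
have ewy : e2 y w by rewrite (esymm sH).
apply: (@mkUB' [:: (a, y); (b, y)] [:: (a, w); (b, w)]) => [[x z]|v].
- move=> _; rewrite !inE !xpair_eqE => /norP[n1 n2].
  have zw : z != w.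
    apply: contraNneq n1 => zw; subst z; rewrite eqxx andbT.
    have : x \in [set a; b] by rewrite -Eab inE.
    rewrite !inE => /orP[// | /eqP xb]; exfalso; move: n2; by rewrite xb !eqxx.
  have [x' xs xx'] := oth x.
  exists (x', w); first by move: xs; rewrite !inE => /orP[]/eqP->; rewrite eqxx ?orbT.
  by rewrite /direct_prod /= xx' univ2.
- rewrite /= !inE => /or4P[]/eqP->.
  + by exists (b, w); rewrite ?inE ?eqxx ?orbT // /direct_prod /= eab ewy.
  + by exists (a, w); rewrite ?inE ?eqxx ?orbT // /direct_prod /= eba ewy.
  + by exists (b, y); rewrite ?inE ?eqxx ?orbT // /direct_prod /= eab wy.
  + by exists (a, y); rewrite ?inE ?eqxx ?orbT // /direct_prod /= eba wy.
Qed.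

Lemma UB_tc : triangle_centered e1 -> triangle_centered e2 -> gamma_tR E <= 6.
Proof.
move=> [x [y [z [xy yz xz Hv]]]] [x' [y' [z' [xy' yz' xz' Hv']]]].
apply: (@UB_dom [:: (x, x'); (y, y'); (z, z')]) => [[v v']].
have := Hv v; have := Hv' v'.
rewrite /direct_prod /=.
case E1: (e1 v x); case E2: (e1 v y); case E3: (e1 v z);
case F1: (e2 v' x'); case F2: (e2 v' y'); case F3: (e2 v' z') => //= _ _;
first [ by exists (x, x'); rewrite ?inE ?eqxx //= ?E1 ?F1
      | by exists (y, y'); rewrite ?inE ?eqxx ?orbT //= ?E2 ?F2
      | by exists (z, z'); rewrite ?inE ?eqxx ?orbT //= ?E3 ?F3 ].
Qed.

Lemma UB_7 : has_universal e1 -> has_universal e2 -> gamma_tR E <= 7.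
Proof.
move=> [u U] [w W].
have [a ua] := nG u; have [y wy] := nH w.
have au : a != u by rewrite eq_sym (adj_neq sG ua).
have yw : y != w by rewrite eq_sym (adj_neq sH wy).
have eau : e1 a u by rewrite (esymm sG).
have ewy : e2 y w by rewrite (esymm sH).
apply: (@mkUB' [:: (a, y)] [:: (u, w); (u, y); (a, w)]) => [[p q]|v].
- rewrite !inE !xpair_eqE => _ /norP[n1 /norP[n2 _]].
  case: (eqVneq p u) => [pu|pu].
    subst p; move: n1; rewrite eqxx /= => qw.
    exists (a, w); first by rewrite !inE eqxx !orbT.
    by rewrite /direct_prod /= ua univ2.
  case: (eqVneq q w) => [qw|qw].
    subst q; exists (u, y); first by rewrite !inE eqxx !orbT.
    by rewrite /direct_prod /= univ1 // wy.
  exists (u, w); first by rewrite !inE eqxx.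
  by rewrite /direct_prod /= univ1 // univ2.
- rewrite /= !inE => /or4P[]/eqP->.
  + by exists (u, w); rewrite ?inE ?eqxx ?orbT // /direct_prod /= eau ewy.
  + by exists (a, y); rewrite ?inE ?eqxx ?orbT // /direct_prod /= ua wy.
  + by exists (a, w); rewrite ?inE ?eqxx ?orbT // /direct_prod /= ua ewy.
  + by exists (u, y); rewrite ?inE ?eqxx ?orbT // /direct_prod /= eau wy.
Qed.

Lemma UB_8 : gamma_t e1 = 2 -> gamma_t e2 = 2 -> gamma_tR E <= 8.
Proof.
move=> /(gamma_t2 sG nG) [p [q Hpq]] /(gamma_t2 sH nH) [r [s Hrs]].
apply: (@UB_dom [:: (p, r); (p, s); (q, r); (q, s)]) => [[v v']].
have := Hpq v; have := Hrs v'; rewrite /direct_prod /=.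
case/orP => h1; case/orP => h2;
first [ by exists (p, r); rewrite ?inE ?eqxx ?orbT //= ?h1 ?h2
      | by exists (p, s); rewrite ?inE ?eqxx ?orbT //= ?h1 ?h2
      | by exists (q, r); rewrite ?inE ?eqxx ?orbT //= ?h1 ?h2
      | by exists (q, s); rewrite ?inE ?eqxx ?orbT //= ?h1 ?h2 ].
Qed.
End UB.

Lemma gamma_swap_le (T1 T2 : finType) (e1 : rel T1) (e2 : rel T2) :
  no_isolated e1 -> no_isolated e2 ->
  gamma_tR (direct_prod e2 e1) <= gamma_tR (direct_prod e1 e2).
Proof.
move=> nG nH; have [f [tf ->]] := gamma_att (prod_noiso nG nH).
rewrite -(fsw_weight f); exact: gamma_le (fsw_trdf tf).
Qed.

Lemma gamma_swap (T1 T2 : finType) (e1 : rel T1) (e2 : rel T2) :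
  no_isolated e1 -> no_isolated e2 ->
  gamma_tR (direct_prod e2 e1) = gamma_tR (direct_prod e1 e2).
Proof.
move=> nG nH; apply/eqP; rewrite eqn_leq !gamma_swap_le //.
Qed.

Section Fin.
Variables (T1 T2 : finType) (e1 : rel T1) (e2 : rel T2).
Hypotheses (sG : simple_graph e1) (sH : simple_graph e2) (nG : no_isolated e1) (nH : no_isolated e2).

Lemma UB_iii : iii e1 e2 -> gamma_tR (direct_prod e1 e2) <= 6.
Proof.
case=> [[h1 [h2 _]]|[[K [_ U]]|[K [_ U]]]|[t1 t2]].
- exact: UB_iii1.
- exact: UB_iii2.
- by rewrite -gamma_swap //; apply: UB_iii2.
- exact: UB_tc.
Qed.

Lemma iiiK : iii e1 e2 -> isK2 e1 -> isK2 e2 -> False.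
Proof.
move=> H [c1 _] [c2 _]; move: H; rewrite /iii c1 c2.
case=> [[_ [_ []]]|[[_ []]|[_ []]]|[t1 _]] //.
by have := tc_card sG t1; rewrite c1.
Qed.

Lemma univ_pos : has_universal e1 -> 0 < #|universals e1|.
Proof. by case=> u U; rewrite card_gt0; apply/set0Pn; exists u; rewrite inE. Qed.
Lemma univ_pos2 : has_universal e2 -> 0 < #|universals e2|.
Proof. by case=> u U; rewrite card_gt0; apply/set0Pn; exists u; rewrite inE. Qed.

Lemma mid : has_universal e1 -> has_universal e2 -> ~ iii e1 e2 -> ~ (isK2 e1 /\ isK2 e2) ->
  (#|universals e1| = 1 /\ ~ isK2 e2) \/ (#|universals e2| = 1 /\ ~ isK2 e1).
Proof.
move=> [u U] [w W] Ni NK.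
have n2 := gcard2 sG u nG; have m2 := gcard2 sH w nH.
have p1 := univ_pos (ex_intro _ u U); have p2 := univ_pos2 (ex_intro _ w W).
case: (eqVneq #|universals e1| 1) => [u1|u1].
  left; split => // K2.
  apply: Ni; apply: Or32; right; split => //; split; last by exists u.
  case: (leqP 3 #|T1|) => // h.
  have K1 : isK2 e1 by apply: ord2_K2 => //; apply: le2eq.
  by move: u1; rewrite K2_card_univ.
have u1' : 2 <= #|universals e1| by move: u1 p1; clear; lia.
case: (eqVneq #|universals e2| 1) => [w1|w1].
  right; split => // K1.
  apply: Ni; apply: Or32; left; split => //; split; last by exists w.
  case: (leqP 3 #|T2|) => // h.
  have K2 : isK2 e2 by apply: ord2_K2 => //; apply: le2eq.
  by move: w1; rewrite K2_card_univ.
have w1' : 2 <= #|universals e2| by move: w1 p2; clear; lia.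
exfalso; apply: Ni; apply: Or31; split => //; split => //.
case: (leqP 3 #|T1|) => h1; first by left.
case: (leqP 3 #|T2|) => h2; first by right.
by exfalso; apply: NK; split; apply: ord2_K2 => //; apply: le2eq.
Qed.

Lemma cond_notiii :
  (#|universals e1| = 1 /\ ~ isK2 e2) \/ (#|universals e2| = 1 /\ ~ isK2 e1) ->
  ~ (triangle_centered e1 /\ triangle_centered e2) -> ~ iii e1 e2.
Proof.
move=> C NT; case=> [[h1 [h2 _]]|[[K [_ U]]|[K [_ U]]]|[t1 t2]].
- by case: C => [[c _]|[c _]]; [move: h1|move: h2]; rewrite c.
- have := K2_card_univ K.
  by case: C => [[c _]|[_ c]] //; rewrite c.
- have := K2_card_univ K.
  by case: C => [[_ c]|[c _]] //; rewrite c.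
- exact: NT.
Qed.

Lemma cond_notK :
  (#|universals e1| = 1 /\ ~ isK2 e2) \/ (#|universals e2| = 1 /\ ~ isK2 e1) ->
  ~ (isK2 e1 /\ isK2 e2).
Proof. by case=> [[_ c]|[_ c]] [K1 K2]. Qed.
End Fin.

Theorem theorem3p1 (T1 T2 : finType) (e1 : rel T1) (e2 : rel T2)
  (sG : simple_graph e1) (sH : simple_graph e2)
  (nG : no_isolated e1) (nH : no_isolated e2) :
  let g := gamma_tR (direct_prod e1 e2) in
  [/\ g \notin [:: 1; 2; 3; 5],
      g = 4 <-> (isK2 e1 /\ isK2 e2),
      g = 6 <->
        [\/ (2 <= #|universals e1| /\ 2 <= #|universals e2| /\
             (3 <= #|T1| \/ 3 <= #|T2|)),
            (isK2 e1 /\ 3 <= #|T2| /\ has_universal e2) \/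
            (isK2 e2 /\ 3 <= #|T1| /\ has_universal e1)
          | triangle_centered e1 /\ triangle_centered e2],
      g = 7 <->
        [/\ has_universal e1, has_universal e2,
            (#|universals e1| = 1 /\ ~ isK2 e2) \/
            (#|universals e2| = 1 /\ ~ isK2 e1)
          & ~ (triangle_centered e1 /\ triangle_centered e2)]
    & (~ (has_universal e1 /\ has_universal e2) ->
       gamma_t e1 = 2 -> gamma_t e2 = 2 ->
       ~ (triangle_centered e1 /\ triangle_centered e2) -> g = 8)].
Proof.
move=> g.
have U4 := UB_all (prod_noiso nG nH).
case: (pickP (fun _ : T1 => true)) => [x0 _|e0]; last first.
  have c0 : #|T1| = 0 by apply: eq_card0 => x; have := e0 x.
  have g0 : g = 0 by apply/eqP; rewrite -leqn0; move: U4; rewrite card_prod c0.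
  have nU : ~ has_universal e1 by case=> x; have := e0 x.
  have nK : ~ isK2 e1 by case; rewrite c0.
  have nT : ~ triangle_centered e1 by case=> x; have := e0 x.
  have cU : #|universals e1| = 0 by apply/eqP; rewrite -leqn0 -c0; exact: univ_le.
  rewrite g0; split => //.
  - by split => // [[]].
  - split => //; case=> [[h _]|[[K _]|[_ [h _]]]|[T _]] //; by move: h; rewrite ?cU ?c0.
  - by split => // [[]].
  - by move=> _ /(gamma_t2 sG nG) [p _]; have := e0 p.
case: (pickP (fun _ : T2 => true)) => [y0 _|e0]; last first.
  have c0 : #|T2| = 0 by apply: eq_card0 => x; have := e0 x.
  have g0 : g = 0 by apply/eqP; rewrite -leqn0; move: U4; rewrite card_prod c0 muln0.
  have nU : ~ has_universal e2 by case=> x; have := e0 x.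
  have nK : ~ isK2 e2 by case; rewrite c0.
  have nT : ~ triangle_centered e2 by case=> x; have := e0 x.
  have cU : #|universals e2| = 0 by apply/eqP; rewrite -leqn0 -c0; exact: univ_le.
  rewrite g0; split => //.
  - by split => // [[]].
  - split => //; case=> [[_ [h _]]|[[_ [h _]]|[K _]]|[_ T]] //; by move: h; rewrite ?cU ?c0.
  - by split => // [[]].
  - by move=> _ _ /(gamma_t2 sH nH) [p _]; have := e0 p.
have [f [tf gf]] := gamma_att (prod_noiso nG nH).
have [L4 L5 L6 L7] := LBmain sG sH nG nH tf x0 y0.
rewrite -gf -/g in L4 L5 L6 L7.
have UK : isK2 e1 -> isK2 e2 -> g <= 4 := UB_K2 nG nH.
have U6 : iii e1 e2 -> g <= 6 := UB_iii sG sH nG nH.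
have U7 : has_universal e1 -> has_universal e2 -> g <= 7 := UB_7 sG sH nG nH.
have U8 : gamma_t e1 = 2 -> gamma_t e2 = 2 -> g <= 8 := UB_8 sG sH nG nH.
have nK5 : ~ (g <= 3) by move=> h; clear -h L4; lia.
split.
- rewrite !inE; apply/negP => /or4P[]/eqP eg; try by apply: nK5; rewrite eg.
  by have [K1 K2] := L5 (ltac:(by rewrite eg)); have := UK K1 K2; rewrite eg.
- split => [eg|[K1 K2]]; first by apply: L5; rewrite eg.
  by apply/eqP; rewrite eqn_leq L4 UK.
- split => [eg|C].
    have [//|[K1 K2]] := L6 (ltac:(by rewrite eg)).
    by have := UK K1 K2; rewrite eg.
  have le6 := U6 C.
  case: (leqP g 5) => h; last by apply/eqP; rewrite eqn_leq le6 h.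
  by have [K1 K2] := L5 h; exfalso; apply: (iiiK sG C K1 K2).
- split => [eg|[HU1 HU2 C NT]].
    have nT : ~ (triangle_centered e1 /\ triangle_centered e2).
      by move=> T; have := U6 (Or33 _ _ T); rewrite eg.
    have nI : ~ iii e1 e2 by move=> I; have := U6 I; rewrite eg.
    have nK : ~ (isK2 e1 /\ isK2 e2) by move=> [K1 K2]; have := UK K1 K2; rewrite eg.
    have [[HU1 HU2]|//] := L7 (ltac:(by rewrite eg)).
    by split => //; apply: mid.
  have le7 := U7 HU1 HU2.
  case: (leqP g 6) => h; last by apply/eqP; rewrite eqn_leq le7 h.
  have [I|K] := L6 h; first by exfalso; apply: (cond_notiii C NT I).
  by exfalso; apply: (cond_notK C K).
- move=> NU h1 h2 NT.
  have le8 := U8 h1 h2.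
  case: (leqP g 7) => h; last by apply/eqP; rewrite eqn_leq le8 h.
  by have [|] := L7 h.
Qed.
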